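(* Let $\alpha>1$, $k\in\mathbb{N}$, $m\in\mathbb{N}_0$ with $m\ge 1+\frac{k}{2}$, and $f\in\mathcal{M}_{\alpha,m}$. Fix $t_0,u_1,u_2\in\mathbb{R}$ with $t_0>1$ and $\frac12<u_1<u_2<\alpha$. Then there exists a continuous function $\tilde g_k:\mathbb{R}\to\mathbb{R}$ integrable at infinity such that $\left|\frac{\zeta^k(s)}{\zeta(2s)}f^*(s)\right|\le\tilde g_k(\operatorname{Im}(s))$ for all $s$ with $u_1\le\operatorname{Re}(s)\le u_2$ and $|\operatorname{Im}(s)|\ge t_0$.
   Context: For $\alpha>1$ and $m\in\mathbb{N}_0$, the class $\mathcal{M}_{\alpha,m}$ consists of the functions $f$ defined on $[0,\infty)$ such that $f\in\mathcal{C}^{(m)}([0,\infty))$ and $f^{(j)}(x)=\mathcal{O}(x^{-\alpha-j})$ as $x\to\infty$, for all $j=0,1,\dots,m$. $f^*(s)=\int_0^\infty f(x)x^{s-1}dx$ is the Mellin transform of $f$ (analytic for $0<\operatorname{Re}s<\alpha$). $\zeta$ is the Riemann zeta function. ''Integrable at infinity'' means $\int_{|t|\ge t_0}|\tilde g_k(t)|dt<\infty$. *)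

(* Defs.v *)
From Stdlib Require Import Reals.
From Coquelicot Require Import Coquelicot.
Open Scope R_scope.

(* complex power x^s = exp(s ln x) for a real x > 0 and s : C *)
Definition cpow (x : R) (s : C) : C :=
  (Rpower x (Re s) * cos (Im s * ln x), Rpower x (Re s) * sin (Im s * ln x)).

(* improper integral over (a, +oo) of a complex-valued function, via its real
   and imaginary parts (Coquelicot's C is not a normed R-module instance) *)
Definition CInt_gen (F : R -> C) (a : (R -> Prop) -> Prop) : C :=
  (RInt_gen (fun x => Re (F x)) a (Rbar_locally p_infty),
   RInt_gen (fun x => Im (F x)) a (Rbar_locally p_infty)).

Definition mellin (f : R -> R) (s : C) : C :=
  CInt_gen (fun x => Cmult (RtoC (f x)) (cpow x (Cminus s 1))) (at_right 0).

(* Riemann zeta function, for Re s > 0, s <> 1, by the standard continuation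
   zeta(s) = s/(s-1) - s * int_1^oo {x} x^(-s-1) dx
   (equal to sum_n n^-s for Re s > 1). Only used for Re s > 1/2, s <> 1. *)
Definition zeta (s : C) : C :=
  Cminus (Cdiv s (Cminus s 1))
    (Cmult s (CInt_gen (fun x => Cmult (RtoC (frac_part x)) (cpow x (Copp (Cplus s 1))))
                       (at_point 1))).

(* f in C^m([0,oo)) with f^(j)(x) = O(x^(-alpha-j)) as x -> oo, j = 0..m.
   F j is the j-th derivative of f on [0,oo) (one-sided at 0). *)
Definition class_M (alpha : R) (m : nat) (f : R -> R) : Prop :=
  exists F : nat -> R -> R,
    (forall x, 0 <= x -> F 0%nat x = f x) /\
    (forall j, (j <= m)%nat ->
       (forall x, 0 < x -> continuous (F j) x) /\
       filterlim (F j) (at_right 0) (locally (F j 0))) /\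
    (forall j, (j < m)%nat ->
       (forall x, 0 < x -> is_derive (F j) x (F (S j) x)) /\
       filterlim (fun h => (F j h - F j 0) / h) (at_right 0) (locally (F (S j) 0))) /\
    (forall j, (j <= m)%nat ->
       exists K X : R, 0 < X /\
         forall x, X <= x -> Rabs (F j x) <= K * Rpower x (- alpha - INR j)).

(* Main.v *)
Require Import Defs.
From Stdlib Require Import Reals Lra Lia FunctionalExtensionality ZArith Arith Classical.
From Coquelicot Require Import Coquelicot.
Open Scope R_scope.

Lemma norm_C (x : C) : @norm _ C_R_NormedModule x = Cmod x.
Proof.
  unfold norm; simpl. unfold prod_norm, Cmod. simpl. unfold abs; simpl.
  assert (K : forall r : R, norm r * (norm r * 1) = r * (r * 1)).
  { intros r. unfold norm; simpl. unfold abs; simpl. rewrite !Rmult_1_r.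
    rewrite <- Rabs_mult. apply Rabs_pos_eq. apply Rle_0_sqr. }
  rewrite !K. reflexivity.
Qed.

Lemma scal_C (r : R) (x : C) : @scal _ C_R_ModuleSpace r x = (RtoC r * x)%C.
Proof.
  destruct x as [a b]. unfold scal; simpl. unfold prod_scal; simpl.
  unfold scal; simpl. unfold mult; simpl.
  apply injective_projections; simpl; ring.
Qed.

Lemma minus_C (x y : C) : minus (x : C_R_NormedModule) y = (x - y)%C.
Proof. reflexivity. Qed.
Lemma plus_C (x y : C) : plus (x : C_R_NormedModule) y = (x + y)%C.
Proof. reflexivity. Qed.
Lemma opp_C (x : C) : opp (x : C_R_NormedModule) = (- x)%C.
Proof. reflexivity. Qed.
Lemma zero_C : (zero : C_R_NormedModule) = RtoC 0.
Proof. reflexivity. Qed.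


Lemma cpow_plus x a b : 0 < x -> cpow x (a + b)%C = (cpow x a * cpow x b)%C.
Proof.
  intros Hx. unfold cpow. destruct a as [a1 a2], b as [b1 b2]; simpl.
  rewrite Rpower_plus, Rmult_plus_distr_r, cos_plus, sin_plus.
  apply injective_projections; simpl; ring.
Qed.

Lemma cpow_mod x s : 0 < x -> Cmod (cpow x s) = Rpower x (Re s).
Proof.
  intros Hx. unfold cpow, Cmod; cbn [fst snd].
  set (P := Rpower x (Re s)). set (th := Im s * ln x).
  assert (HP : 0 < P) by (unfold P, Rpower; apply exp_pos).
  replace ((P * cos th) ^ 2 + (P * sin th) ^ 2) with (P ^ 2).
  - apply sqrt_pow2; lra.
  - pose proof (sin2_cos2 th) as H. unfold Rsqr in H.
    transitivity (P^2 * (sin th * sin th + cos th * cos th)).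
    + rewrite H; ring.
    + ring.
Qed.

Lemma cpow_mulb x y s : 0 < x -> 0 < y -> cpow (x * y) s = (cpow x s * cpow y s)%C.
Proof.
  intros Hx Hy. unfold cpow. destruct s as [a b]; simpl.
  rewrite <- Rpower_mult_distr by lra. rewrite ln_mult by lra.
  rewrite Rmult_plus_distr_l, cos_plus, sin_plus.
  apply injective_projections; simpl; ring.
Qed.

Lemma cpow_1 x : 0 < x -> cpow x 1%C = RtoC x.
Proof.
  intros Hx. unfold cpow; simpl. rewrite Rpower_1 by lra. rewrite Rmult_0_l, cos_0, sin_0.
  apply injective_projections; simpl; ring.
Qed.

Lemma cpow_0 x : 0 < x -> cpow x 0%C = 1%C.
Proof.
  intros Hx. unfold cpow; simpl. rewrite Rpower_O by lra. rewrite Rmult_0_l, cos_0, sin_0.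
  apply injective_projections; simpl; ring.
Qed.

Lemma cpow_neq0 x s : 0 < x -> cpow x s <> 0%C.
Proof.
  intros Hx H. assert (Cmod (cpow x s) = 0) by (rewrite H; apply Cmod_0).
  rewrite cpow_mod in H0 by lra. unfold Rpower in H0. pose proof (exp_pos (Re s * ln x)). lra.
Qed.

Lemma Rpower_m1 x a : 0 < x -> Rpower x (a - 1) = Rpower x a / x.
Proof.
  intros Hx. unfold Rminus. rewrite Rpower_plus. rewrite Rpower_Ropp, Rpower_1 by lra. reflexivity.
Qed.

Lemma cpow_derive_re x w : 0 < x ->
  is_derive (fun y => Re (cpow y w)) x (Re (w * cpow x (w - 1))%C).
Proof.
  intros Hx. destruct w as [a b]. unfold cpow; simpl.
  replace (Rpower x (a + - (1))) with (Rpower x a / x) by (rewrite <- Rpower_m1; [f_equal; ring| lra]).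
  replace (b + - 0) with b by ring.
  unfold Rpower. auto_derive; [lra|]. field. lra.
Qed.

Lemma cpow_derive_im x w : 0 < x ->
  is_derive (fun y => Im (cpow y w)) x (Im (w * cpow x (w - 1))%C).
Proof.
  intros Hx. destruct w as [a b]. unfold cpow; simpl.
  replace (Rpower x (a + - (1))) with (Rpower x a / x) by (rewrite <- Rpower_m1; [f_equal; ring| lra]).
  replace (b + - 0) with b by ring.
  unfold Rpower. auto_derive; [lra|]. field. lra.
Qed.

Lemma is_derive_pairC (f g : R -> R) x df dg :
  is_derive f x df -> is_derive g x dg ->
  @is_derive R_AbsRing C_R_NormedModule (fun y => (f y, g y) : C) x ((df, dg) : C).
Proof.
  intros Hf Hg. unfold is_derive in *.
  apply (filterdiff_comp_2 f g (fun a b => (a, b) : C) _ _ (fun a b => (a, b) : C) Hf Hg).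
  apply (filterdiff_ext (fun t => t) _ _).
  - intros [u v]; reflexivity.
  - apply filterdiff_ext_lin with (fun t => t).
    + apply filterdiff_id.
    + intros [u v]; reflexivity.
Qed.

Lemma cpow_derive x w : 0 < x ->
  @is_derive R_AbsRing C_R_NormedModule (fun y => cpow y w) x (w * cpow x (w - 1))%C.
Proof.
  intros Hx.
  assert (E : (w * cpow x (w - 1))%C = (Re (w * cpow x (w - 1))%C, Im (w * cpow x (w - 1))%C)).
  { destruct (w * cpow x (w - 1))%C; reflexivity. }
  rewrite E.
  eapply is_derive_ext. 2: apply is_derive_pairC; [apply cpow_derive_re|apply cpow_derive_im]; lra.
  intros y. unfold cpow. reflexivity.
Qed.

Lemma Re_le_Cmod (c : C) : Rabs (Re c) <= Cmod c.
Proof.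
  unfold Cmod. rewrite <- sqrt_Rsqr_abs. apply sqrt_le_1_alt.
  unfold Rsqr, Re. destruct c as [a b]; simpl. nra.
Qed.
Lemma Im_le_Cmod (c : C) : Rabs (Im c) <= Cmod c.
Proof.
  unfold Cmod. rewrite <- sqrt_Rsqr_abs. apply sqrt_le_1_alt.
  unfold Rsqr, Im. destruct c as [a b]; simpl. nra.
Qed.

Definition climit {T} (F : (T -> Prop) -> Prop) (I : T -> C) (l : C) :=
  forall eps, 0 < eps -> F (fun x => Cmod (I x - l)%C < eps).

Lemma climit_filterlim {T} (F : (T -> Prop) -> Prop) {HF : Filter F} (I : T -> C) l :
  climit F I l -> filterlim I F (@locally C_R_NormedModule l).
Proof.
  intros H P [eps HP]. unfold filtermap.
  apply filter_imp with (fun x => Cmod (I x - l)%C < eps).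
  - intros x Hx. apply HP. apply norm_compat1. rewrite norm_C, minus_C. exact Hx.
  - apply H. apply cond_pos.
Qed.

Lemma filterlim_climit {T} (F : (T -> Prop) -> Prop) {HF : Filter F} (I : T -> C) l :
  filterlim I F (@locally C_R_NormedModule l) -> climit F I l.
Proof.
  intros H eps Heps.
  pose proof (@norm_factor_gt_0 R_AbsRing C_R_NormedModule) as Hnf.
  assert (He : 0 < eps / (@norm_factor R_AbsRing C_R_NormedModule)).
  { apply Rdiv_lt_0_compat; lra. }
  apply (H (fun y => Cmod (y - l)%C < eps)).
  exists (mkposreal _ He). intros y Hy.
  pose proof (norm_compat2 _ _ _ Hy) as Hn. rewrite norm_C, minus_C in Hn. simpl in Hn.
  replace eps with (@norm_factor R_AbsRing C_R_NormedModule * (eps / @norm_factor R_AbsRing C_R_NormedModule)). exact Hn. field. lra.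
Qed.

Definition has_int (h : R -> C) (Fa Fb : (R -> Prop) -> Prop) (l : C) :=
  filter_prod Fa Fb (fun ab => @ex_RInt C_R_NormedModule h (fst ab) (snd ab)) /\
  climit (filter_prod Fa Fb) (fun ab => @RInt C_R_CompleteNormedModule h (fst ab) (snd ab)) l.

Lemma has_int_CInt (h : R -> C) Fa l : ProperFilter Fa ->
  has_int h Fa (Rbar_locally p_infty) l -> CInt_gen h Fa = l.
Proof.
  intros HFa [Hex Hl]. unfold CInt_gen.
  assert (Hpr : forall (p : C -> R), (forall c, Rabs (p c) <= Cmod c) ->
     (forall (a b : R) (l0 : C), @is_RInt C_R_NormedModule h a b l0 -> is_RInt (fun x => p (h x)) a b (p l0)) ->
     (forall c d, p (c - d)%C = p c - p d) ->
     RInt_gen (fun x => p (h x)) Fa (Rbar_locally p_infty) = p l).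
  { intros p Hp Hpi Hpm. apply is_RInt_gen_unique. unfold is_RInt_gen.
    apply filterlimi_lim_ext_loc with (fun ab => p (@RInt C_R_CompleteNormedModule h (fst ab) (snd ab))).
    - apply filter_imp with (2 := Hex). intros ab Hab. apply Hpi. apply (RInt_correct (V := C_R_CompleteNormedModule)). exact Hab.
    - apply filterlim_locally. intros eps.
      apply filter_imp with (2 := Hl eps (cond_pos eps)).
      intros ab Hab. unfold ball; simpl. unfold AbsRing_ball, abs, minus, plus, opp; simpl.
      replace (p (@RInt C_R_CompleteNormedModule h (fst ab) (snd ab)) + - p l) with (p (@RInt C_R_CompleteNormedModule h (fst ab) (snd ab) - l)%C) by (rewrite Hpm; ring).
      eapply Rle_lt_trans. apply Hp. exact Hab. }
  apply injective_projections; simpl.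
  - apply (Hpr Re). apply Re_le_Cmod. intros a b l0 H. apply (is_RInt_fct_extend_fst _ _ _ _ H).
    intros; reflexivity.
  - apply (Hpr Im). apply Im_le_Cmod. intros a b l0 H. apply (is_RInt_fct_extend_snd _ _ _ _ H).
    intros; reflexivity.
Qed.

Notation CRInt := (@RInt C_R_CompleteNormedModule).
Notation CexRInt := (@ex_RInt C_R_NormedModule).
Notation CisRInt := (@is_RInt C_R_NormedModule).

Lemma CRInt_chasles h a b c : CexRInt h a b -> CexRInt h b c ->
  CRInt h a c = (CRInt h a b + CRInt h b c)%C.
Proof.
  intros H1 H2. rewrite <- (RInt_Chasles (V := C_R_CompleteNormedModule) h a b c H1 H2). reflexivity.
Qed.

Lemma CRInt_swap h a b : CexRInt h a b -> CRInt h b a = (- CRInt h a b)%C.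
Proof.
  intros H. rewrite <- (opp_RInt_swap (V := C_R_CompleteNormedModule) h a b H). reflexivity.
Qed.

Lemma has_int_exists (h : R -> C) Fa Fb (D : R -> Prop) (Phi : R -> R) pa pb :
  ProperFilter Fa -> ProperFilter Fb -> Fa D -> Fb D ->
  (forall x y, D x -> D y -> CexRInt h x y) ->
  (forall x y, D x -> D y -> x <= y -> Cmod (CRInt h x y) <= Phi y - Phi x) ->
  (forall eps, 0 < eps -> Fa (fun x => Rabs (Phi x - pa) < eps)) ->
  (forall eps, 0 < eps -> Fb (fun x => Rabs (Phi x - pb) < eps)) ->
  exists l, has_int h Fa Fb l /\ Cmod l <= Rabs (pb - pa).
Proof.
  intros HFa HFb HDa HDb Hex Hb Hpa Hpb.
  assert (Hb2 : forall x y, D x -> D y -> Cmod (CRInt h x y) <= Rabs (Phi y - Phi x)).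
  { intros x y Dx Dy. destruct (Rle_or_lt x y) as [Hxy|Hxy].
    - eapply Rle_trans. apply Hb; auto. apply Rle_abs.
    - rewrite CRInt_swap by (apply Hex; auto). rewrite Cmod_opp.
      eapply Rle_trans. apply Hb; auto; lra. rewrite Rabs_minus_sym. apply Rle_abs. }
  set (F := filter_prod Fa Fb).
  assert (HF : ProperFilter F) by (apply filter_prod_proper; auto).
  assert (Hgood : forall eps, 0 < eps -> F (fun ab => D (fst ab) /\ D (snd ab) /\
             Rabs (Phi (fst ab) - pa) < eps /\ Rabs (Phi (snd ab) - pb) < eps)).
  { intros eps He. apply Filter_prod with (fun a => D a /\ Rabs (Phi a - pa) < eps)
        (fun b => D b /\ Rabs (Phi b - pb) < eps).
    - apply filter_and; auto.
    - apply filter_and; auto.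
    - intros x y [? ?] [? ?]; simpl; tauto. }
  assert (Hcv : exists y : C_R_CompleteNormedModule,
            filterlim (fun ab => CRInt h (fst ab) (snd ab)) F (locally y)).
  { apply (filterlim_locally_cauchy (U := C_R_CompleteNormedModule) (F := F)).
    intros eps. exists (fun ab => D (fst ab) /\ D (snd ab) /\
             Rabs (Phi (fst ab) - pa) < eps/4 /\ Rabs (Phi (snd ab) - pb) < eps/4).
    split. apply Hgood. pose proof (cond_pos eps); lra.
    intros [a b] [a' b'] (Da & Db & Ha & Hb') (Da' & Db' & Ha' & Hb''); simpl in *.
    apply (norm_compat1 (V := C_R_NormedModule)). rewrite norm_C, minus_C.
    rewrite (CRInt_chasles h a' a b') by (apply Hex; auto).
    rewrite (CRInt_chasles h a b b') by (apply Hex; auto).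
    replace (CRInt h a' a + (CRInt h a b + CRInt h b b') - CRInt h a b)%C
      with (CRInt h a' a + CRInt h b b')%C by ring.
    eapply Rle_lt_trans. apply Cmod_triangle.
    eapply Rle_lt_trans. apply Rplus_le_compat; apply Hb2; auto.
    assert (Rabs (Phi a - Phi a') < eps / 2).
    { revert Ha Ha'. unfold Rabs; repeat destruct Rcase_abs; intros; lra. }
    assert (Rabs (Phi b' - Phi b) < eps / 2).
    { revert Hb' Hb''. unfold Rabs; repeat destruct Rcase_abs; intros; lra. }
    lra. }
  destruct Hcv as [y Hy]. exists y.
  assert (Hcl : climit F (fun ab => CRInt h (fst ab) (snd ab)) y).
  { apply filterlim_climit. apply filter_filter. exact Hy. }
  split. split.
  - apply filter_imp with (2 := Hgood 1 Rlt_0_1). intros ab (? & ? & _). apply Hex; auto.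
  - exact Hcl.
  - apply Rle_plus_epsilon. intros eps He.
    assert (He3 : 0 < eps / 3) by lra.
    destruct (filter_ex (F := F) _ (filter_and _ _ (Hcl _ He3) (Hgood _ He3))) as [[a b] [H1 (Da & Db & Ha & Hb')]].
    simpl in *.
    replace y with (CRInt h a b - (CRInt h a b - y))%C by ring.
    eapply Rle_trans. apply Cmod_triangle. rewrite Cmod_opp.
    pose proof (Hb2 a b Da Db).
    revert Ha Hb' H H1. unfold Rabs; repeat destruct Rcase_abs; intros; lra.
Qed.

Lemma filter_prod_at_point_r Fa b (P : R * R -> Prop) : Filter Fa ->
  filter_prod Fa (at_point b) P -> Fa (fun a => P (a, b)).
Proof.
  intros HF [Q R HQ HR HP]. apply filter_imp with Q; auto.
Qed.
Lemma filter_prod_at_point_l a Fb (P : R * R -> Prop) : Filter Fb ->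
  filter_prod (at_point a) Fb P -> Fb (fun b => P (a, b)).
Proof.
  intros HF [Q R HQ HR HP]. apply filter_imp with R; auto.
Qed.

Lemma has_int_chasles h Fa b Fc l1 l2 : Filter Fa -> Filter Fc ->
  has_int h Fa (at_point b) l1 -> has_int h (at_point b) Fc l2 -> has_int h Fa Fc (l1 + l2)%C.
Proof.
  intros HFa HFc [E1 L1] [E2 L2].
  apply filter_prod_at_point_r in E1; auto. apply filter_prod_at_point_l in E2; auto.
  split.
  - apply Filter_prod with (1 := E1) (2 := E2). intros x y H1 H2. simpl in *.
    eapply (ex_RInt_Chasles (V := C_R_NormedModule)); eauto.
  - intros eps He. assert (He2 : 0 < eps / 2) by lra.
    specialize (L1 _ He2). specialize (L2 _ He2).
    apply filter_prod_at_point_r in L1; auto. apply filter_prod_at_point_l in L2; auto.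
    apply Filter_prod with (1 := filter_and _ _ E1 L1) (2 := filter_and _ _ E2 L2).
    intros x y [H1 H1'] [H2 H2']. simpl in *.
    rewrite (CRInt_chasles h x b y) by auto.
    replace (CRInt h x b + CRInt h b y - (l1 + l2))%C with
      ((CRInt h x b - l1) + (CRInt h b y - l2))%C by ring.
    eapply Rle_lt_trans. apply Cmod_triangle. lra.
Qed.

Lemma has_int_unique h Fa Fb l1 l2 : ProperFilter Fa -> ProperFilter Fb ->
  has_int h Fa Fb l1 -> has_int h Fa Fb l2 -> l1 = l2.
Proof.
  intros HFa HFb [_ L1] [_ L2].
  assert (HF : ProperFilter (filter_prod Fa Fb)) by (apply filter_prod_proper; auto).
  assert (Cmod (l1 - l2) = 0).
  { apply Rle_antisym; [|apply Cmod_ge_0].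
    apply Rle_plus_epsilon. intros eps He. assert (He2 : 0 < eps / 2) by lra.
    destruct (filter_ex _ (filter_and _ _ (L1 _ He2) (L2 _ He2))) as [ab [H1 H2]].
    replace (l1 - l2)%C with ((CRInt h (fst ab) (snd ab) - l2) - (CRInt h (fst ab) (snd ab) - l1))%C by ring.
    eapply Rle_trans. apply Cmod_triangle. rewrite Cmod_opp. lra. }
  apply Cmod_eq_0 in H. replace l1 with ((l1 - l2) + l2)%C by ring. rewrite H. ring.
Qed.

Lemma Rpower_pos x e : 0 < Rpower x e.
Proof. unfold Rpower; apply exp_pos. Qed.

Lemma Rpower_lim0 e : 0 < e -> forall eps, 0 < eps -> at_right 0 (fun x => Rpower x e < eps).
Proof.
  intros He eps Heps. unfold at_right, within, locally.
  assert (Hd : 0 < Rpower eps (/ e)) by apply Rpower_pos.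
  exists (mkposreal _ Hd). intros y Hy Hy0. simpl in Hy.
  unfold ball in Hy; simpl in Hy; unfold AbsRing_ball, abs, minus, plus, opp in Hy; simpl in Hy.
  rewrite Ropp_0, Rplus_0_r, Rabs_pos_eq in Hy by lra.
  replace eps with (Rpower (Rpower eps (/ e)) e).
  - apply Rlt_Rpower_l; lra.
  - rewrite Rpower_mult. rewrite Rinv_l by lra. apply Rpower_1; lra.
Qed.

Lemma Rpower_liminf e : e < 0 -> forall eps, 0 < eps -> Rbar_locally p_infty (fun x => Rpower x e < eps).
Proof.
  intros He eps Heps. simpl.
  assert (Hd : 0 < Rpower eps (/ e)) by apply Rpower_pos.
  exists (Rpower eps (/ e)). intros x Hx.
  replace eps with (Rpower (Rpower eps (/ e)) e).
  - set (M := Rpower eps (/ e)) in *.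
    assert (H1 : Rpower M (- e) < Rpower x (- e)) by (apply Rlt_Rpower_l; lra).
    assert (E : forall z, Rpower z e = / Rpower z (- e)).
    { intros z. rewrite <- Rpower_Ropp. rewrite Ropp_involutive. reflexivity. }
    rewrite !E. apply Rinv_lt_contravar; auto.
    apply Rmult_lt_0_compat; apply Rpower_pos.
  - rewrite Rpower_mult. rewrite Rinv_l by lra. apply Rpower_1; lra.
Qed.

Lemma Rpower_derive x e : 0 < x -> is_derive (fun y => Rpower y e) x (e * Rpower x (e - 1)).
Proof. intros Hx. apply is_derive_Reals. apply derivable_pt_lim_power; auto. Qed.

Lemma Rpower_cont x e : 0 < x -> continuous (fun y => Rpower y e) x.
Proof. intros Hx. apply (ex_derive_continuous (K := R_AbsRing) (V := R_NormedModule)). eexists. apply Rpower_derive; auto. Qed.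

Lemma is_RInt_Rpow x y c : 0 < x -> 0 < y -> c <> 0 ->
  is_RInt (fun t => Rpower t (c - 1)) x y ((Rpower y c - Rpower x c) / c).
Proof.
  intros Hx Hy Hc.
  assert (Hm : forall t, Rmin x y <= t <= Rmax x y -> 0 < t).
  { intros t Ht. assert (0 < Rmin x y) by (apply Rmin_glb_lt; auto). lra. }
  replace ((Rpower y c - Rpower x c) / c) with (minus ((fun t => Rpower t c / c) y) ((fun t => Rpower t c / c) x)).
  2:{ unfold minus, plus, opp; simpl. field. auto. }
  apply (@is_RInt_derive R_CompleteNormedModule (fun t => Rpower t c / c) (fun t => Rpower t (c-1))).
  - intros t Ht. specialize (Hm t Ht).
    rewrite Rpower_m1 by lra. unfold Rpower. auto_derive; [lra|]. field. split; lra.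
  - intros t Ht. apply Rpower_cont. auto.
Qed.

Lemma cpow_cont x w : 0 < x -> @continuous R_UniformSpace C_R_NormedModule (fun y => cpow y w) x.
Proof.
  intros Hx. apply (ex_derive_continuous (K := R_AbsRing) (V := C_R_NormedModule)).
  eexists. apply cpow_derive; auto.
Qed.

Lemma hcont (F : R -> R) w x : 0 < x -> continuous F x ->
  @continuous R_UniformSpace C_R_NormedModule (fun y => (RtoC (F y) * cpow y w)%C) x.
Proof.
  intros Hx HF.
  apply (continuous_ext (fun y => @scal R_Ring C_R_ModuleSpace (F y) (cpow y w))).
  intros y. apply scal_C.
  apply (continuous_scal (K := R_AbsRing) (V := C_R_NormedModule)); auto.
  apply cpow_cont; auto.
Qed.

Lemma Cmod_hF (F : R -> R) w x : 0 < x ->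
  Cmod (RtoC (F x) * cpow x w)%C = Rabs (F x) * Rpower x (Re w).
Proof. intros Hx. rewrite Cmod_mult, Cmod_R, cpow_mod; auto. Qed.

Lemma has_int_ext_pos h g Fa Fb l :
  Filter Fa -> Filter Fb -> Fa (fun x => 0 < x) -> Fb (fun x => 0 < x) ->
  (forall x, 0 < x -> h x = g x) -> has_int h Fa Fb l -> has_int g Fa Fb l.
Proof.
  intros HFa HFb Ha Hb Hhg [E L].
  assert (P : filter_prod Fa Fb (fun ab => 0 < fst ab /\ 0 < snd ab)).
  { apply Filter_prod with (1 := Ha) (2 := Hb). simpl; auto. }
  assert (Heq : forall ab, 0 < fst ab /\ 0 < snd ab -> forall x, Rmin (fst ab) (snd ab) < x < Rmax (fst ab) (snd ab) -> h x = g x).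
  { intros ab [H1 H2] x Hx. apply Hhg. assert (0 < Rmin (fst ab) (snd ab)) by (apply Rmin_glb_lt; auto). lra. }
  split.
  - apply filter_imp with (2 := filter_and _ _ E P). intros ab [H1 H2].
    eapply ex_RInt_ext. apply Heq; auto. auto.
  - intros eps He. apply filter_imp with (2 := filter_and _ _ (L eps He) P). intros ab [H1 H2].
    rewrite <- (RInt_ext (V := C_R_CompleteNormedModule) h g). auto. apply Heq; auto.
Qed.

Lemma CisRInt_Cmult c h a b l : CisRInt h a b l -> CisRInt (fun x => c * h x)%C a b (c * l)%C.
Proof.
  intros H. destruct c as [c1 c2].
  assert (H1 := is_RInt_fct_extend_fst _ _ _ _ H).
  assert (H2 := is_RInt_fct_extend_snd _ _ _ _ H).
  replace ((c1, c2) * l)%C with (c1 * fst l - c2 * snd l, c1 * snd l + c2 * fst l).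
  2:{ destruct l; unfold Cmult; simpl; reflexivity. }
  apply (is_RInt_fct_extend_pair (U := R_NormedModule) (V := R_NormedModule)).
  - eapply is_RInt_ext. 2: apply (is_RInt_minus (V := R_NormedModule)); apply (is_RInt_scal (V := R_NormedModule)); [exact H1|exact H2].
    intros x _. unfold Cmult, minus, plus, opp, scal; simpl. unfold mult; simpl. ring.
  - eapply is_RInt_ext. 2: apply (is_RInt_plus (V := R_NormedModule)); apply (is_RInt_scal (V := R_NormedModule)); [exact H2|exact H1].
    intros x _. unfold Cmult, minus, plus, opp, scal; simpl. unfold mult; simpl. ring.
Qed.

Lemma nonneg_div3 K P d : 0 <= K -> 0 < P -> 0 < d -> 0 <= K * P / d.
Proof. intros. unfold Rdiv. apply Rmult_le_pos. apply Rmult_le_pos; lra. apply Rlt_le, Rinv_0_lt_compat; lra. Qed.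

Lemma mel_piece (F : R -> R) (w : C) M K X be :
  0 <= M -> 0 <= K -> 1 <= X -> 0 < Re w -> Re w < be ->
  (forall x, 0 < x -> continuous F x) ->
  (forall x, 0 < x <= X -> Rabs (F x) <= M) ->
  (forall x, X <= x -> Rabs (F x) <= K * Rpower x (- be)) ->
  exists l, has_int (fun x => RtoC (F x) * cpow x (w - 1))%C (at_right 0) (Rbar_locally p_infty) l /\
    Cmod l <= M * Rpower X (Re w) / Re w + K * Rpower X (Re w - be) / (be - Re w).
Proof.
  intros HM HK HX He Hb Fc FM FK. set (e := Re w) in *.
  set (h := fun x => (RtoC (F x) * cpow x (w - 1))%C).
  assert (Hex : forall x y, 0 < x -> 0 < y -> CexRInt h x y).
  { intros x y Hx Hy. apply (ex_RInt_continuous (V := C_R_CompleteNormedModule)).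
    intros z Hz. assert (0 < Rmin x y) by (apply Rmin_glb_lt; auto).
    apply hcont. lra. apply Fc. lra. }
  assert (Hmod : forall x, 0 < x -> Cmod (h x) = Rabs (F x) * Rpower x (e - 1)).
  { intros x Hx. unfold h. rewrite Cmod_hF by auto. f_equal. }
  destruct (has_int_exists h (at_right 0) (at_point X) (fun x => 0 < x <= X)
     (fun x => M * Rpower x e / e) 0 (M * Rpower X e / e)) as [l1 [H1 B1]].
  - typeclasses eauto.
  - typeclasses eauto.
  - exists (mkposreal _ (Rlt_le_trans _ _ _ Rlt_0_1 HX)). intros y Hy Hy0. split; auto.
    simpl in Hy. unfold ball in Hy; simpl in Hy; unfold AbsRing_ball, abs, minus, plus, opp in Hy; simpl in Hy.
    rewrite Ropp_0, Rplus_0_r, Rabs_pos_eq in Hy; lra.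
  - unfold at_point. lra.
  - intros x y Hx Hy. apply Hex; lra.
  - intros x y Hx Hy Hxy.
    assert (HI := is_RInt_Rpow x y e ltac:(lra) ltac:(lra) ltac:(lra)).
    apply (is_RInt_scal (V := R_NormedModule) _ _ _ M) in HI.
    rewrite <- norm_C.
    eapply Rle_trans. eapply (norm_RInt_le (V := C_R_NormedModule) h (fun t => scal M (Rpower t (e - 1))) x y).
    + exact Hxy.
    + intros t Ht. rewrite norm_C, Hmod by lra. unfold scal; simpl; unfold mult; simpl.
      apply Rmult_le_compat_r. apply Rlt_le, Rpower_pos. apply FM. lra.
    + apply (RInt_correct (V := C_R_CompleteNormedModule)). apply Hex; lra.
    + exact HI.
    + unfold scal; simpl; unfold mult; simpl. right. field. lra.
  - intros eps Heps.
    assert (He' : 0 < eps * e / (M + 1)) by (apply Rdiv_lt_0_compat; [apply Rmult_lt_0_compat|]; lra).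
    apply filter_imp with (2 := Rpower_lim0 e He _ He'). intros x Hx.
    rewrite Rminus_0_r. pose proof (Rpower_pos x e).
    rewrite Rabs_pos_eq by (apply Rmult_le_pos; [apply Rmult_le_pos|apply Rlt_le, Rinv_0_lt_compat]; lra).
    apply Rle_lt_trans with ((M + 1) * Rpower x e / e).
    + unfold Rdiv. apply Rmult_le_compat_r. apply Rlt_le, Rinv_0_lt_compat; lra. nra.
    + apply Rmult_lt_reg_r with (e / (M+1)). apply Rdiv_lt_0_compat; lra.
      replace ((M + 1) * Rpower x e / e * (e / (M + 1))) with (Rpower x e) by (field; lra).
      replace (eps * (e / (M + 1))) with (eps * e / (M + 1)) by (field; lra). exact Hx.
  - intros eps Heps. unfold at_point. rewrite Rminus_eq_0, Rabs_R0. exact Heps.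
  -
    destruct (has_int_exists h (at_point X) (Rbar_locally p_infty) (fun x => X <= x)
       (fun x => - K * Rpower x (e - be) / (be - e)) (- K * Rpower X (e - be) / (be - e)) 0) as [l2 [H2 B2]].
    + typeclasses eauto.
    + typeclasses eauto.
    + unfold at_point; lra.
    + exists X. intros; lra.
    + intros x y Hx Hy. apply Hex; lra.
    + intros x y Hx Hy Hxy.
      assert (HI := is_RInt_Rpow x y (e - be) ltac:(lra) ltac:(lra) ltac:(lra)).
      apply (is_RInt_scal (V := R_NormedModule) _ _ _ K) in HI.
      rewrite <- norm_C.
      eapply Rle_trans. eapply (norm_RInt_le (V := C_R_NormedModule) h (fun t => scal K (Rpower t (e - be - 1))) x y).
      * exact Hxy.
      * intros t Ht. rewrite norm_C, Hmod by lra. unfold scal; simpl; unfold mult; simpl.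
        replace (Rpower t (e - be - 1)) with (Rpower t (- be) * Rpower t (e - 1)).
        2:{ rewrite <- Rpower_plus. f_equal. ring. }
        rewrite <- Rmult_assoc. apply Rmult_le_compat_r. apply Rlt_le, Rpower_pos. apply FK. lra.
      * apply (RInt_correct (V := C_R_CompleteNormedModule)). apply Hex; lra.
      * exact HI.
      * unfold scal; simpl; unfold mult; simpl. right. field. lra.
    + intros eps Heps. unfold at_point. rewrite Rminus_eq_0, Rabs_R0. exact Heps.
    + intros eps Heps.
      assert (He' : 0 < eps * (be - e) / (K + 1)) by (apply Rdiv_lt_0_compat; [apply Rmult_lt_0_compat|]; lra).
      apply filter_imp with (2 := Rpower_liminf (e - be) ltac:(lra) _ He'). intros x Hx.
      rewrite Rminus_0_r. pose proof (Rpower_pos x (e - be)).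
      rewrite Rabs_left1.
      2:{ pose proof (nonneg_div3 K (Rpower x (e - be)) (be - e) HK ltac:(auto) ltac:(lra)). unfold Rdiv in *. lra. }
      apply Rle_lt_trans with ((K + 1) * Rpower x (e - be) / (be - e)).
      * replace (- (- K * Rpower x (e - be) / (be - e))) with (K * Rpower x (e - be) / (be - e)) by (field; lra).
        unfold Rdiv. apply Rmult_le_compat_r. apply Rlt_le, Rinv_0_lt_compat; lra. nra.
      * apply Rmult_lt_reg_r with ((be - e) / (K+1)). apply Rdiv_lt_0_compat; lra.
        replace ((K + 1) * Rpower x (e - be) / (be - e) * ((be - e) / (K + 1))) with (Rpower x (e - be)) by (field; lra).
        replace (eps * ((be - e) / (K + 1))) with (eps * (be - e) / (K + 1)) by (field; lra). exact Hx.
    + exists (l1 + l2)%C. split.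
      * apply has_int_chasles with X; auto; typeclasses eauto.
      * eapply Rle_trans. apply Cmod_triangle. apply Rplus_le_compat.
        -- eapply Rle_trans. exact B1. rewrite Rminus_0_r. right. apply Rabs_pos_eq.
           apply Rmult_le_pos. apply Rmult_le_pos; auto. apply Rlt_le, Rpower_pos. apply Rlt_le, Rinv_0_lt_compat; lra.
        -- eapply Rle_trans. exact B2. right. rewrite Rminus_0_l, Rabs_Ropp.
           rewrite Rabs_left1. field. lra.
           pose proof (nonneg_div3 K (Rpower X (e - be)) (be - e) HK (Rpower_pos _ _) ltac:(lra)). unfold Rdiv in *. lra.
Qed.

Lemma bounds_gen (G : R -> R) (c : R) :
  (forall x, 0 < x -> continuous G x) -> filterlim G (at_right 0) (locally (G 0)) ->
  (exists K X, 0 < X /\ forall x, X <= x -> Rabs (G x) <= K * Rpower x c) ->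
  exists M K X, 0 <= M /\ 0 <= K /\ 1 <= X /\ (forall x, 0 < x <= X -> Rabs (G x) <= M) /\
    (forall x, X <= x -> Rabs (G x) <= K * Rpower x c).
Proof.
  intros Gc G0 [K [X [HX HK]]].
  set (X' := Rmax X 1).
  apply filterlim_locally with (eps := mkposreal 1 Rlt_0_1) in G0.
  destruct G0 as [d Hd].
  assert (Hd2 : 0 < d / 2) by (pose proof (cond_pos d); lra).
  destruct (bounded_continuity (V := R_NormedModule) G (d / 2) X') as [M' HM'].
  { intros x Hx. apply Gc. lra. }
  exists (Rmax (Rabs (G 0) + 1) M'), (Rabs K), X'. repeat split.
  - eapply Rle_trans; [|apply Rmax_l]. pose proof (Rabs_pos (G 0)); lra.
  - apply Rabs_pos.
  - apply Rmax_r.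
  - intros x [Hx1 Hx2]. destruct (Rlt_or_le x d) as [Hxd|Hxd].
    + eapply Rle_trans; [|apply Rmax_l].
      assert (B : ball (G 0) 1 (G x)).
      { apply Hd; auto. unfold ball; simpl; unfold AbsRing_ball, abs, minus, plus, opp; simpl.
        rewrite Ropp_0, Rplus_0_r, Rabs_pos_eq; lra. }
      unfold ball in B; simpl in B; unfold AbsRing_ball, abs, minus, plus, opp in B; simpl in B.
      revert B. unfold Rabs; repeat destruct Rcase_abs; intros; lra.
    + eapply Rle_trans; [|apply Rmax_r]. apply Rlt_le. apply HM'. lra.
  - intros x Hx. assert (X <= x) by (eapply Rle_trans; [apply Rmax_l|exact Hx]).
    eapply Rle_trans. apply HK; auto. apply Rmult_le_compat_r. apply Rlt_le, Rpower_pos. apply Rle_abs.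
Qed.

Lemma climit_Cmult {T} (F : (T -> Prop) -> Prop) {HF : Filter F} (g : T -> C) l c :
  climit F g l -> climit F (fun y => c * g y)%C (c * l)%C.
Proof.
  intros H eps He. assert (He' : 0 < eps / (Cmod c + 1)) by (apply Rdiv_lt_0_compat; pose proof (Cmod_ge_0 c); lra).
  apply filter_imp with (2 := H _ He'). intros y Hy.
  replace (c * g y - c * l)%C with (c * (g y - l))%C by ring. rewrite Cmod_mult.
  pose proof (Cmod_ge_0 c). pose proof (Cmod_ge_0 (g y - l)%C).
  apply Rle_lt_trans with ((Cmod c + 1) * Cmod (g y - l)%C). nra.
  apply Rmult_lt_reg_r with (/ (Cmod c + 1)). apply Rinv_0_lt_compat; lra.
  replace ((Cmod c + 1) * Cmod (g y - l)%C * / (Cmod c + 1)) with (Cmod (g y - l)%C) by (field; lra).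
  exact Hy.
Qed.

Lemma Cmult_cont c (g : R -> C) x : @continuous R_UniformSpace C_R_NormedModule g x ->
  @continuous R_UniformSpace C_R_NormedModule (fun y => c * g y)%C x.
Proof.
  intros H. apply climit_filterlim. typeclasses eauto. apply climit_Cmult. typeclasses eauto.
  apply filterlim_climit. typeclasses eauto. exact H.
Qed.

Lemma mel_ibp (Fj Fj1 : R -> R) (w : C) M K X be l0 l1 :
  0 <= M -> 0 <= K -> 0 < X -> 0 < Re w -> Re w < be ->
  (forall x, 0 < x <= X -> Rabs (Fj x) <= M) ->
  (forall x, X <= x -> Rabs (Fj x) <= K * Rpower x (- be)) ->
  (forall x, 0 < x -> is_derive Fj x (Fj1 x)) -> (forall x, 0 < x -> continuous Fj1 x) ->
  has_int (fun x => RtoC (Fj x) * cpow x (w - 1))%C (at_right 0) (Rbar_locally p_infty) l0 ->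
  has_int (fun x => RtoC (Fj1 x) * cpow x w)%C (at_right 0) (Rbar_locally p_infty) l1 ->
  (l1 + w * l0)%C = 0%C.
Proof.
  intros HM HK HX He Hb FM FK Fd Fc [E0 L0] [E1 L1].
  set (e := Re w) in *.
  set (h0 := fun x => (RtoC (Fj x) * cpow x (w - 1))%C) in *.
  set (h1 := fun x => (RtoC (Fj1 x) * cpow x w)%C) in *.
  set (B := fun x => (RtoC (Fj x) * cpow x w)%C).
  assert (KEY : forall a b, 0 < a -> 0 < b -> CexRInt h0 a b -> CexRInt h1 a b ->
            (CRInt h1 a b + w * CRInt h0 a b)%C = (B b - B a)%C).
  { intros a b Ha Hb' X0 X1.
    assert (Hpos : forall t, Rmin a b <= t <= Rmax a b -> 0 < t).
    { intros t Ht. assert (0 < Rmin a b) by (apply Rmin_glb_lt; auto). lra. }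
    assert (I1 := is_RInt_scal_derive (V := C_R_CompleteNormedModule) Fj (fun x => cpow x w) Fj1
                   (fun x => w * cpow x (w - 1))%C a b).
    assert (I2 : CisRInt (fun t => h1 t + w * h0 t)%C a b (CRInt h1 a b + w * CRInt h0 a b)%C).
    { apply (is_RInt_plus (V := C_R_NormedModule)).
      apply (RInt_correct (V := C_R_CompleteNormedModule)); auto.
      apply CisRInt_Cmult. apply (RInt_correct (V := C_R_CompleteNormedModule)); auto. }
    apply (is_RInt_unique (V := C_R_CompleteNormedModule)) in I2.
    assert (I3 : CisRInt (fun t => h1 t + w * h0 t)%C a b (B b - B a)%C).
    { replace (B b - B a)%C with (minus (scal (Fj b) (cpow b w) : C_R_NormedModule) (scal (Fj a) (cpow a w)))
        by (rewrite minus_C, !scal_C; reflexivity).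
      eapply is_RInt_ext. 2: apply I1.
      - intros x _. rewrite plus_C, !scal_C. unfold h0, h1.
        match goal with |- plus ?u ?v = ?b => change (@eq C (Cplus u v) b) end. ring.
      - intros t Ht. apply Fd; auto.
      - intros t Ht. apply cpow_derive; auto.
      - intros t Ht. apply Fc; auto.
      - intros t Ht. apply Cmult_cont. apply cpow_cont; auto. }
    rewrite <- I2. apply (is_RInt_unique (V := C_R_CompleteNormedModule)). exact I3. }
  apply Cmod_eq_0. apply Rle_antisym; [|apply Cmod_ge_0].
  apply Rle_plus_epsilon. intros eps Heps. rewrite Rplus_0_l.
  pose proof (Cmod_ge_0 w) as Hw.
  assert (E4 : 0 < eps / 4) by lra.
  assert (Ea : 0 < eps / 4 / (M + 1)) by (apply Rdiv_lt_0_compat; lra).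
  assert (Eb : 0 < eps / 4 / (K + 1)) by (apply Rdiv_lt_0_compat; lra).
  assert (Ew : 0 < eps / 4 / (Cmod w + 1)) by (apply Rdiv_lt_0_compat; lra).
  assert (FA : at_right 0 (fun a => (0 < a <= X) /\ Rpower a e < eps / 4 / (M + 1))).
  { apply filter_and. 2: apply Rpower_lim0; auto.
    unfold at_right, within. exists (mkposreal X HX). intros y Hy Hy0. split; auto.
    simpl in Hy. unfold ball in Hy; simpl in Hy; unfold AbsRing_ball, abs, minus, plus, opp in Hy; simpl in Hy.
    rewrite Ropp_0, Rplus_0_r, Rabs_pos_eq in Hy; lra. }
  assert (FB : Rbar_locally p_infty (fun b => X <= b /\ 0 < b /\ Rpower b (e - be) < eps / 4 / (K + 1))).
  { apply filter_and; [|apply filter_and].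
    - exists X. intros; lra.
    - exists 0. intros; lra.
    - apply Rpower_liminf; lra. }
  assert (HP : ProperFilter (filter_prod (at_right 0) (Rbar_locally p_infty))) by (apply filter_prod_proper; typeclasses eauto).
  assert (FAB : filter_prod (at_right 0) (Rbar_locally p_infty)
     (fun ab => ((0 < fst ab <= X) /\ Rpower (fst ab) e < eps / 4 / (M + 1)) /\
                (X <= snd ab /\ 0 < snd ab /\ Rpower (snd ab) (e - be) < eps / 4 / (K + 1)))).
  { apply Filter_prod with (1 := FA) (2 := FB). simpl; auto. }
  destruct (filter_ex _ (filter_and _ _ FAB (filter_and _ _ (filter_and _ _ E0 E1)
              (filter_and _ _ (L0 _ Ew) (L1 _ E4))))) as [[a b] H].
  simpl in H. destruct H as [[[[Ha HaX] Ha2] [Hb1 [Hb2 Hb3]]] [[X0 X1] [Y0 Y1]]].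
  specialize (KEY a b Ha Hb2 X0 X1).
  replace (l1 + w * l0)%C with ((B b - B a) - (CRInt h1 a b - l1) - w * (CRInt h0 a b - l0))%C
    by (rewrite <- KEY; ring).
  assert (Ba : Cmod (B a) <= eps / 4).
  { unfold B. rewrite Cmod_hF by lra. fold e.
    apply Rle_trans with ((M + 1) * Rpower a e).
    + apply Rmult_le_compat_r. apply Rlt_le, Rpower_pos. pose proof (FM a (conj Ha HaX)); lra.
    + apply Rmult_le_reg_r with (/ (M + 1)). apply Rinv_0_lt_compat; lra.
      replace ((M + 1) * Rpower a e * / (M + 1)) with (Rpower a e) by (field; lra). unfold Rdiv in Ha2. lra. }
  assert (Bb : Cmod (B b) <= eps / 4).
  { unfold B. rewrite Cmod_hF by lra. fold e.
    apply Rle_trans with (K * Rpower b (- be) * Rpower b e).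
    + apply Rmult_le_compat_r. apply Rlt_le, Rpower_pos. apply FK; lra.
    + rewrite Rmult_assoc, <- Rpower_plus. replace (- be + e) with (e - be) by ring.
      apply Rle_trans with ((K + 1) * Rpower b (e - be)).
      * apply Rmult_le_compat_r. apply Rlt_le, Rpower_pos. lra.
      * apply Rmult_le_reg_r with (/ (K + 1)). apply Rinv_0_lt_compat; lra.
        replace ((K + 1) * Rpower b (e - be) * / (K + 1)) with (Rpower b (e - be)) by (field; lra). unfold Rdiv in Hb3. lra. }
  assert (Bw : Cmod (w * (CRInt h0 a b - l0))%C <= eps / 4).
  { rewrite Cmod_mult. apply Rle_trans with ((Cmod w + 1) * Cmod (CRInt h0 a b - l0)%C).
    apply Rmult_le_compat_r. apply Cmod_ge_0. lra.
    apply Rmult_le_reg_r with (/ (Cmod w + 1)). apply Rinv_0_lt_compat; lra.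
    replace ((Cmod w + 1) * Cmod (CRInt h0 a b - l0)%C * / (Cmod w + 1)) with (Cmod (CRInt h0 a b - l0)%C) by (field; lra).
    unfold Rdiv in Y0. lra. }
  eapply Rle_trans. apply Cmod_triangle. rewrite Cmod_opp.
  eapply Rle_trans. apply Rplus_le_compat_r. apply Cmod_triangle. rewrite Cmod_opp.
  eapply Rle_trans. apply Rplus_le_compat_r. apply Rplus_le_compat_r. apply Cmod_triangle. rewrite Cmod_opp.
  lra.
Qed.

Lemma cpow_ext x a b : Re a = Re b -> Im a = Im b -> cpow x a = cpow x b.
Proof. intros H1 H2. unfold cpow. rewrite H1, H2. reflexivity. Qed.

Lemma has_int_ext h g Fa Fb l : (forall x, h x = g x) -> has_int h Fa Fb l -> has_int g Fa Fb l.
Proof.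
  intros E H. replace g with h. auto. apply functional_extensionality. auto.
Qed.

Lemma mellin_bound alpha m f u1 u2 : class_M alpha m f -> 0 < u1 -> u1 < u2 -> u2 < alpha ->
  exists C0, 0 <= C0 /\ forall s, u1 <= Re s <= u2 -> 1 <= Rabs (Im s) ->
    Cmod (mellin f s) <= C0 / Rabs (Im s) ^ m.
Proof.
  intros [F [HF0 [Hc [Hd Hb]]]] Hu1 Hu12 Hu2.
  assert (FB : forall j, (j <= m)%nat -> exists M K X, 0 <= M /\ 0 <= K /\ 1 <= X /\
      (forall x, 0 < x <= X -> Rabs (F j x) <= M) /\
      (forall x, X <= x -> Rabs (F j x) <= K * Rpower x (- (alpha + INR j)))).
  { intros j Hj. destruct (Hc j Hj) as [Hc1 Hc2].
    replace (- (alpha + INR j)) with (- alpha - INR j) by ring.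
    apply bounds_gen; auto. }
  destruct (FB m (le_n m)) as [Mm [Km [Xm (HMm & HKm & HXm & FMm & FKm)]]].
  exists (Mm * Rpower Xm (u2 + INR m) / u1 + Km / (alpha - u2)). split.
  { apply Rplus_le_le_0_compat. apply nonneg_div3; auto. apply Rpower_pos. 
    unfold Rdiv; apply Rmult_le_pos; auto. apply Rlt_le, Rinv_0_lt_compat; lra. }
  intros s Hs Ht.
  set (t := Im s) in *.
  set (hj := fun (j : nat) x => (RtoC (F j x) * cpow x (s + RtoC (INR j) - 1))%C).
  assert (Rew : forall j : nat, Re (s + RtoC (INR j))%C = Re s + INR j) by (intros; destruct s; unfold Im, Re, RtoC, Cplus; simpl; ring).
  assert (Imw : forall j : nat, Im (s + RtoC (INR j))%C = t) by (intros; unfold t; destruct s; unfold Im, Re, RtoC, Cplus; simpl; ring).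
  assert (Ex : forall j, (j <= m)%nat -> exists l, has_int (hj j) (at_right 0) (Rbar_locally p_infty) l).
  { intros j Hj. destruct (FB j Hj) as [M [K [X (HM & HK & HX & FM & FK)]]].
    destruct (mel_piece (F j) (s + RtoC (INR j))%C M K X (alpha + INR j)) as [l [Hl _]]; auto.
    - rewrite Rew. pose proof (pos_INR j). lra.
    - rewrite Rew. lra.
    - intros x Hx. apply (Hc j Hj). auto.
    - exists l. exact Hl. }
  assert (Q : forall i, (i <= m)%nat -> forall l, has_int (hj (m - i)%nat) (at_right 0) (Rbar_locally p_infty) l ->
      Cmod l <= (Mm * Rpower Xm (u2 + INR m) / u1 + Km / (alpha - u2)) / Rabs t ^ i).
  { induction i as [|i IH]; intros Hi l Hl.
    - rewrite Nat.sub_0_r in Hl. simpl pow. rewrite Rdiv_1_r.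
      destruct (mel_piece (F m) (s + RtoC (INR m))%C Mm Km Xm (alpha + INR m)) as [l' [Hl' Bl']]; auto.
      + rewrite Rew. pose proof (pos_INR m). lra.
      + rewrite Rew. lra.
      + intros x Hx. apply (Hc m (le_n m)). auto.
      + assert (l = l') by (eapply has_int_unique; [| |exact Hl|exact Hl']; typeclasses eauto). subst l'.
        eapply Rle_trans. exact Bl'. rewrite Rew. apply Rplus_le_compat.
        * unfold Rdiv. apply Rmult_le_compat. apply Rmult_le_pos; auto. apply Rlt_le, Rpower_pos.
          apply Rlt_le, Rinv_0_lt_compat. pose proof (pos_INR m). lra.
          apply Rmult_le_compat_l; auto. apply Rle_Rpower; auto. lra.
          apply Rinv_le_contravar; auto. pose proof (pos_INR m). lra.
        * replace (Re s + INR m - (alpha + INR m)) with (Re s - alpha) by ring.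
          replace (alpha + INR m - (Re s + INR m)) with (alpha - Re s) by ring.
          unfold Rdiv. rewrite Rmult_assoc. apply Rmult_le_compat_l; auto.
          apply Rle_trans with (1 * / (alpha - Re s)).
          -- apply Rmult_le_compat_r. apply Rlt_le, Rinv_0_lt_compat; lra.
             rewrite <- (Rpower_O Xm) by lra. apply Rle_Rpower; lra.
          -- rewrite Rmult_1_l. apply Rinv_le_contravar; lra.
    - set (j := (m - S i)%nat) in *.
      assert (Hj : (m - i)%nat = S j) by (unfold j; lia).
      destruct (Ex (S j) ltac:(lia)) as [l' Hl'].
      assert (Bl' := IH ltac:(lia) l' ltac:(rewrite Hj; exact Hl')).
      destruct (FB j ltac:(lia)) as [M [K [X (HM & HK & HX & FM & FK)]]].
      assert (Z := mel_ibp (F j) (F (S j)) (s + RtoC (INR j))%C M K X (alpha + INR j) l l').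
      assert (Hw : Rabs t <= Cmod (s + RtoC (INR j))%C) by (rewrite <- (Imw j); apply Im_le_Cmod).
      assert (Ht0 : 0 < Rabs t) by lra.
      assert (Hw0 : (s + RtoC (INR j))%C <> 0%C).
      { intro E. rewrite E, Cmod_0 in Hw. lra. }
      assert (E : (l' + (s + RtoC (INR j)) * l)%C = 0%C).
      { apply Z; auto.
        - lra.
        - rewrite Rew. pose proof (pos_INR j). lra.
        - rewrite Rew. lra.
        - intros x Hx. apply (Hd j ltac:(lia)). auto.
        - intros x Hx. apply (Hc (S j) ltac:(lia)). auto.
        - eapply has_int_ext. 2: exact Hl'. intros x. unfold hj. f_equal. apply cpow_ext; rewrite ?S_INR; destruct s; unfold Re, Im, RtoC, Cplus, Cminus, Copp; cbn [fst snd]; unfold Cplus; cbn [fst snd]; ring. }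
      assert (El : l = (- l' / (s + RtoC (INR j)))%C).
      { field_simplify_eq; auto. replace (- l')%C with ((s + RtoC (INR j)) * l - (l' + (s + RtoC (INR j)) * l))%C by ring.
        rewrite E. ring. }
      rewrite El, Cmod_div, Cmod_opp by auto.
      simpl pow. unfold Rdiv in *.
      apply Rle_trans with (Cmod l' * / Rabs t).
      + apply Rmult_le_compat_l. apply Cmod_ge_0. apply Rinv_le_contravar; auto.
      + rewrite Rinv_mult. rewrite (Rmult_comm (/ Rabs t)), <- Rmult_assoc.
        apply Rmult_le_compat_r. apply Rlt_le, Rinv_0_lt_compat; auto. exact Bl'. }
  destruct (Ex 0%nat ltac:(lia)) as [l0 Hl0].
  assert (B0 := Q m (le_n m) l0 ltac:(rewrite Nat.sub_diag; exact Hl0)).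
  unfold mellin. erewrite has_int_CInt. exact B0. typeclasses eauto.
  eapply has_int_ext_pos. 6: exact Hl0. 1,2: typeclasses eauto.
  - exists (mkposreal 1 Rlt_0_1). intros; auto.
  - exists 0. intros; auto.
  - intros x Hx. unfold hj. rewrite HF0 by lra. f_equal. apply cpow_ext; destruct s; unfold Re, Im, RtoC, Cminus, Copp, Cplus; cbn [fst snd INR]; ring.
Qed.

Ltac cfold := repeat match goal with
 | |- context [@minus ?G ?u ?v] => change (@minus G u v) with (Cminus u v)
 | |- context [@plus ?G ?u ?v] => change (@plus G u v) with (Cplus u v)
 end; try match goal with |- @eq _ ?a ?b => change (@eq C a b) end.

Lemma is_derive_Cmult (c : C) (g : R -> C) x l :
  @is_derive R_AbsRing C_R_NormedModule g x l ->
  @is_derive R_AbsRing C_R_NormedModule (fun y => c * g y)%C x (c * l)%C.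
Proof.
  intros H. unfold is_derive in *.
  assert (Lin : @is_linear R_AbsRing C_R_NormedModule C_R_NormedModule (fun z => c * z)%C).
  { split.
    - intros [u1 u2] [v1 v2]. destruct c as [c1 c2]. apply injective_projections; simpl; unfold plus; simpl; unfold plus; simpl; ring.
    - intros k [u1 u2]. destruct c as [c1 c2]. apply injective_projections; simpl; unfold scal; simpl; unfold scal; simpl; unfold mult; simpl; ring.
    - exists (Cmod c + 1). split. pose proof (Cmod_ge_0 c); lra.
      intros u. rewrite !norm_C, Cmod_mult. pose proof (Cmod_ge_0 u). pose proof (Cmod_ge_0 c). nra. }
  eapply filterdiff_ext_lin.
  apply (filterdiff_comp g (fun z => c * z)%C _ (fun z => c * z)%C H).
  apply filterdiff_linear. exact Lin.
  intros y. simpl. rewrite !scal_C. ring.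
Qed.

Lemma is_derive_Cplus (f g : R -> C) x df dg :
  @is_derive R_AbsRing C_R_NormedModule f x df -> @is_derive R_AbsRing C_R_NormedModule g x dg ->
  @is_derive R_AbsRing C_R_NormedModule (fun y => f y + g y)%C x (df + dg)%C.
Proof. intros. apply (is_derive_plus (V := C_R_NormedModule)); auto. Qed.

Lemma Cplus_cont (f g : R -> C) x : @continuous R_UniformSpace C_R_NormedModule f x ->
  @continuous R_UniformSpace C_R_NormedModule g x ->
  @continuous R_UniformSpace C_R_NormedModule (fun y => f y + g y)%C x.
Proof. intros. apply (continuous_plus (V := C_R_NormedModule)); auto. Qed.

Lemma frac_int (n : nat) x : INR n < x < INR n + 1 -> frac_part x = x - INR n.
Proof.
  intros Hx. unfold frac_part, Int_part.
  assert (up x = (Z.of_nat n + 1)%Z).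
  { symmetry. apply tech_up; rewrite plus_IZR, <- INR_IZR_INZ; simpl; lra. }
  rewrite H. replace (Z.of_nat n + 1 - 1)%Z with (Z.of_nat n) by ring. rewrite <- INR_IZR_INZ. ring.
Qed.

Lemma frac_bnd x : 0 <= frac_part x < 1.
Proof. unfold frac_part. pose proof (base_Int_part x). lra. Qed.

Definition zf (s : C) := fun x => Cmult (RtoC (frac_part x)) (cpow x (Copp (Cplus s 1))).
Definition term (s : C) (n : nat) := cpow (INR n) (- s)%C.
Fixpoint csum (f : nat -> C) (N : nat) : C :=
  match N with O => 0%C | S k => (csum f k + f (S k))%C end.

Lemma cpow_minus1 x w : 0 < x -> cpow x w = (RtoC x * cpow x (w - 1))%C.
Proof.
  intros Hx. rewrite <- cpow_1 by auto. rewrite <- cpow_plus by auto. apply cpow_ext.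
  destruct w; unfold Re, Im, RtoC, Cminus, Copp, Cplus; cbn [fst snd]; ring.
  destruct w; unfold Re, Im, RtoC, Cminus, Copp, Cplus; cbn [fst snd]; ring.
Qed.

Definition Pz (s : C) (N : R) : C :=
  ((cpow (N + 1) (1 - s) - cpow N (1 - s)) / (1 - s) + RtoC N * (cpow (N + 1) (- s) - cpow N (- s)) / s)%C.

Lemma piece_int (s : C) (N : nat) : (1 <= N)%nat -> s <> 0%C -> (1 - s)%C <> 0%C ->
  CisRInt (zf s) (INR N) (INR N + 1) (Pz s (INR N)).
Proof.
  intros HN Hs Hs1. assert (HN' : 1 <= INR N) by (apply (le_INR 1); auto).
  set (A := fun x => (/ (1 - s) * cpow x (1 - s) + (RtoC (INR N) / s) * cpow x (- s))%C).
  set (dA := fun x => (/ (1 - s) * ((1 - s) * cpow x (1 - s - 1)) + (RtoC (INR N) / s) * ((- s) * cpow x (- s - 1)))%C).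
  assert (Hpos : forall t, Rmin (INR N) (INR N + 1) <= t <= Rmax (INR N) (INR N + 1) -> 0 < t).
  { intros t Ht. rewrite Rmin_left in Ht by lra. lra. }
  assert (I1 : CisRInt dA (INR N) (INR N + 1) (minus (A (INR N + 1)) (A (INR N)) : C_R_NormedModule)).
  { apply (is_RInt_derive (V := C_R_CompleteNormedModule) A dA).
    - intros t Ht. specialize (Hpos t Ht). unfold A, dA.
      apply is_derive_Cplus; apply is_derive_Cmult; apply cpow_derive; auto.
    - intros t Ht. specialize (Hpos t Ht). unfold dA.
      apply Cplus_cont; apply Cmult_cont; apply Cmult_cont; apply cpow_cont; auto. }
  replace (Pz s (INR N)) with (minus (A (INR N + 1)) (A (INR N)) : C_R_NormedModule).
  2:{ cfold. unfold A, Pz. field. split; [exact Hs|exact Hs1]. }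
  eapply is_RInt_ext. 2: exact I1.
  intros x Hx. rewrite Rmin_left, Rmax_right in Hx by lra.
  unfold zf, dA. match goal with |- ?a = ?b => change (@eq C a b) end. rewrite (frac_int N x Hx).
  assert (Hx0 : 0 < x) by lra.
  replace (cpow x (1 - s - 1)) with (cpow x (- s)) by (apply cpow_ext; destruct s; unfold Re, Im, RtoC, Cminus, Copp, Cplus; cbn [fst snd]; ring).
  replace (cpow x (- s - 1)) with (cpow x (- (s + 1))) by (apply cpow_ext; destruct s; unfold Re, Im, RtoC, Cminus, Copp, Cplus; cbn [fst snd]; ring).
  rewrite (cpow_minus1 x (- s)) by auto.
  replace (cpow x (- s - 1)) with (cpow x (- (s + 1))) by (apply cpow_ext; destruct s; unfold Re, Im, RtoC, Cminus, Copp, Cplus; cbn [fst snd]; ring).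
  replace (RtoC (x - INR N)) with (RtoC x - RtoC (INR N))%C by (unfold RtoC, Cminus, Copp, Cplus; cbn [fst snd]; f_equal; ring).
  field. split; auto.
Qed.

Lemma zf_ex_piece (s : C) (n : nat) a b : 1 <= INR n -> INR n <= a -> a <= b -> b <= INR n + 1 ->
  CexRInt (zf s) a b.
Proof.
  intros Hn Ha Hab Hb.
  set (g := fun x => (RtoC (x - INR n) * cpow x (- (s + 1)))%C).
  assert (Eg : CexRInt g (INR n) (INR n + 1)).
  { apply (ex_RInt_continuous (V := C_R_CompleteNormedModule)). intros z Hz.
    rewrite Rmin_left, Rmax_right in Hz by lra.
    apply (hcont (fun x => x - INR n)). lra.
    apply (ex_derive_continuous (K := R_AbsRing) (V := R_NormedModule)). auto_derive; auto. }
  assert (Eg2 : CexRInt g a b).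
  { apply (ex_RInt_Chasles_1 (V := C_R_CompleteNormedModule)) with (INR n + 1). lra.
    apply (ex_RInt_Chasles_2 (V := C_R_CompleteNormedModule)) with (INR n). lra. exact Eg. }
  eapply ex_RInt_ext. 2: exact Eg2.
  intros x Hx. rewrite Rmin_left, Rmax_right in Hx by lra.
  unfold g, zf. rewrite (frac_int n x). reflexivity. lra.
Qed.

Lemma nat_above x : exists n : nat, x < INR n.
Proof.
  destruct (archimed x) as [H _]. exists (Z.to_nat (up x)).
  destruct (Z.lt_ge_cases (up x) 0) as [Hz|Hz].
  - pose proof (pos_INR (Z.to_nat (up x))). apply IZR_lt in Hz. lra.
  - rewrite INR_IZR_INZ, Z2Nat.id; auto.
Qed.

Lemma nat_floor x : 0 <= x -> exists N : nat, INR N <= x < INR N + 1.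
Proof.
  intros Hx. destruct (archimed x) as [H1 H2].
  assert (Hz : (1 <= up x)%Z).
  { apply le_IZR. apply Rnot_lt_le. intros Hc. assert (up x <= 0)%Z by (apply Z.lt_succ_r; apply lt_IZR; simpl; lra).
    apply IZR_le in H. simpl in H. lra. }
  exists (Z.to_nat (up x - 1)). rewrite INR_IZR_INZ, Z2Nat.id by lia. rewrite minus_IZR. simpl. lra.
Qed.

Lemma zf_ex (s : C) a b : 1 <= a -> 1 <= b -> CexRInt (zf s) a b.
Proof.
  assert (K : forall n : nat, forall y, 1 <= y <= INR (S n) + 1 -> CexRInt (zf s) 1 y).
  { induction n as [|n IH]; intros y Hy.
    - simpl in Hy. apply zf_ex_piece with 1%nat; simpl; lra.
    - destruct (Rle_or_lt y (INR (S n) + 1)) as [Hy1|Hy1].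
      + apply IH. lra.
      + apply (ex_RInt_Chasles (V := C_R_NormedModule)) with (INR (S n) + 1).
        apply IH. pose proof (pos_INR (S n)); lra.
        apply zf_ex_piece with (S (S n)); rewrite ?S_INR in *; try lra. pose proof (pos_INR n); lra. }
  assert (K2 : forall y, 1 <= y -> CexRInt (zf s) 1 y).
  { intros y Hy. destruct (nat_above y) as [n Hn]. apply (K n). rewrite S_INR. lra. }
  intros Ha Hb. apply (ex_RInt_Chasles (V := C_R_NormedModule)) with 1.
  apply (ex_RInt_swap (V := C_R_NormedModule)). auto. auto.
Qed.

Lemma tail_int (h : R -> C) a c K : 0 < a -> c < 0 -> 0 <= K ->
  (forall x y, a <= x -> a <= y -> CexRInt h x y) ->
  (forall x, a <= x -> Cmod (h x) <= K * Rpower x (c - 1)) ->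
  exists l, has_int h (at_point a) (Rbar_locally p_infty) l /\ Cmod l <= K * Rpower a c / (- c).
Proof.
  intros Ha Hc HK Hex Hb.
  destruct (has_int_exists h (at_point a) (Rbar_locally p_infty) (fun x => a <= x)
       (fun x => K * Rpower x c / c) (K * Rpower a c / c) 0) as [l [H1 B1]].
  - typeclasses eauto.
  - typeclasses eauto.
  - unfold at_point; lra.
  - exists a. intros; lra.
  - auto.
  - intros x y Hx Hy Hxy.
    assert (HI := is_RInt_Rpow x y c ltac:(lra) ltac:(lra) ltac:(lra)).
    apply (is_RInt_scal (V := R_NormedModule) _ _ _ K) in HI.
    rewrite <- norm_C.
    eapply Rle_trans. eapply (norm_RInt_le (V := C_R_NormedModule) h (fun t => scal K (Rpower t (c - 1))) x y).
    + exact Hxy.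
    + intros t Ht. rewrite norm_C. unfold scal; simpl; unfold mult; simpl. apply Hb. lra.
    + apply (RInt_correct (V := C_R_CompleteNormedModule)). apply Hex; lra.
    + exact HI.
    + unfold scal; simpl; unfold mult; simpl. right. field. lra.
  - intros eps Heps. unfold at_point. rewrite Rminus_eq_0, Rabs_R0. exact Heps.
  - intros eps Heps.
    assert (He' : 0 < eps * (- c) / (K + 1)) by (apply Rdiv_lt_0_compat; [apply Rmult_lt_0_compat|]; lra).
    apply filter_imp with (2 := Rpower_liminf c Hc _ He'). intros x Hx.
    rewrite Rminus_0_r. pose proof (Rpower_pos x c).
    replace (K * Rpower x c / c) with (- (K * Rpower x c / (- c))) by (field; lra).
    rewrite Rabs_Ropp, Rabs_pos_eq by (apply nonneg_div3; lra).
    apply Rle_lt_trans with ((K + 1) * Rpower x c / (- c)).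
    + unfold Rdiv. apply Rmult_le_compat_r. apply Rlt_le, Rinv_0_lt_compat; lra. nra.
    + apply Rmult_lt_reg_r with ((- c) / (K+1)). apply Rdiv_lt_0_compat; lra.
      replace ((K + 1) * Rpower x c / (- c) * ((- c) / (K + 1))) with (Rpower x c) by (field; lra).
      replace (eps * ((- c) / (K + 1))) with (eps * (- c) / (K + 1)) by (field; lra). exact Hx.
  - exists l. split; auto. eapply Rle_trans. exact B1. right.
    replace (0 - K * Rpower a c / c) with (K * Rpower a c / (- c)) by (field; lra).
    apply Rabs_pos_eq. apply nonneg_div3; auto. apply Rpower_pos. lra.
Qed.

Lemma zf_tail (s : C) a : 1 <= a -> 0 < Re s ->
  exists l, has_int (zf s) (at_point a) (Rbar_locally p_infty) l /\ Cmod l <= Rpower a (- Re s) / Re s.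
Proof.
  intros Ha Hs.
  destruct (tail_int (zf s) a (- Re s) 1) as [l [H1 H2]]; try lra.
  - intros; apply zf_ex; lra.
  - intros x Hx. unfold zf. rewrite Cmod_hF by lra. rewrite Rmult_1_l.
    replace (- Re s - 1) with (Re (- (s + 1))%C) by (destruct s; unfold Re, Copp, Cplus, RtoC; simpl; ring).
    pose proof (frac_bnd x). rewrite Rabs_pos_eq by lra. pose proof (Rpower_pos x (Re (- (s + 1))%C)). nra.
  - exists l. split; auto. rewrite Ropp_involutive, Rmult_1_l in H2. exact H2.
Qed.

Lemma has_int_points h a b l : CisRInt h a b l -> has_int h (at_point a) (at_point b) l.
Proof.
  intros H. split.
  - exists (fun x => x = a) (fun y => y = b); unfold at_point; auto.
    intros x y -> ->. simpl. exists l. exact H.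
  - intros eps He. exists (fun x => x = a) (fun y => y = b); unfold at_point; auto.
    intros x y -> ->. simpl. rewrite (is_RInt_unique (V := C_R_CompleteNormedModule) _ _ _ _ H).
    replace (l - l)%C with (RtoC 0) by ring. rewrite Cmod_0. exact He.
Qed.

Lemma cpow_at1 w : cpow 1 w = 1%C.
Proof.
  unfold cpow. rewrite ln_1, Rmult_0_r, cos_0, sin_0. unfold Rpower. rewrite ln_1, Rmult_0_r, exp_0.
  apply injective_projections; simpl; ring.
Qed.

Lemma zeta_id (s : C) (N : nat) l : 0 < Re s -> s <> 1%C -> (1 <= N)%nat ->
  has_int (zf s) (at_point (INR N)) (Rbar_locally p_infty) l ->
  zeta s = (csum (term s) N + cpow (INR N) (1 - s) / (s - 1) - s * l)%C.
Proof.
  intros Hs Hs1 HN. 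
  assert (Hs0 : s <> 0%C).
  { intros E. rewrite E in Hs. simpl in Hs. lra. }
  assert (Hsm : (s - 1)%C <> 0%C).
  { intros E. apply Hs1. replace s with ((s - 1) + 1)%C by ring. rewrite E. ring. }
  assert (Hms : (1 - s)%C <> 0%C).
  { intros E. apply Hsm. replace (s - 1)%C with (- (1 - s))%C by ring. rewrite E. ring. }
  revert l. induction N as [|N IH]; [lia|]. intros l Hl.
  destruct (Nat.eq_dec N 0) as [->|HN0].
  - simpl csum. unfold term. simpl INR. rewrite !cpow_at1.
    unfold zeta. fold (zf s). rewrite (has_int_CInt (zf s) (at_point 1) l); [|typeclasses eauto|exact Hl].
    field. auto.
  - destruct (zf_tail s (INR N) ltac:(apply (le_INR 1); lia) Hs) as [l0 [Hl0 _]].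
    rewrite (IH ltac:(lia) l0 Hl0).
    assert (Hp := has_int_points _ _ _ _ (piece_int s N ltac:(lia) Hs0 Hms)).
    rewrite <- S_INR in Hp.
    assert (E := has_int_unique (zf s) (at_point (INR N)) (Rbar_locally p_infty) l0 _ ltac:(typeclasses eauto) ltac:(typeclasses eauto) Hl0
                  (has_int_chasles (zf s) (at_point (INR N)) (INR (S N)) (Rbar_locally p_infty) _ _ ltac:(typeclasses eauto) ltac:(typeclasses eauto) Hp Hl)).
    rewrite E. simpl csum. unfold term, Pz. rewrite S_INR.
    assert (HN1 : 0 < INR N) by (apply (lt_INR 0); lia).
    rewrite (cpow_minus1 (INR N) (1 - s)), (cpow_minus1 (INR N + 1) (1 - s)) by lra.
    replace (1 - s - 1)%C with (- s)%C by ring.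
    replace (RtoC (INR N + 1)) with (RtoC (INR N) + 1)%C by (unfold RtoC, Cplus; simpl; f_equal; ring).
    set (S0 := csum (fun n : nat => cpow (INR n) (- s)) N).
    set (u := cpow (INR N + 1) (- s)). set (v := cpow (INR N) (- s)). set (n := RtoC (INR N)).
    field. split; auto.
Qed.

Lemma mvt_pow x b : 0 < x -> exists c, x <= c <= x + 1 /\
  Rpower (x + 1) (1 - b) - Rpower x (1 - b) = (1 - b) * Rpower c (- b).
Proof.
  intros Hx.
  destruct (MVT_gen (fun y => Rpower y (1 - b)) x (x + 1) (fun y => (1 - b) * Rpower y (1 - b - 1))) as [c [Hc E]].
  - intros y Hy. rewrite Rmin_left, Rmax_right in Hy by lra. apply Rpower_derive. lra.
  - intros y Hy. rewrite Rmin_left, Rmax_right in Hy by lra. apply continuity_pt_filterlim. apply Rpower_cont. lra.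
  - rewrite Rmin_left, Rmax_right in Hc by lra. exists c. split; auto. rewrite E.
    replace (1 - b - 1) with (- b) by ring. ring.
Qed.

Lemma Rpower_anti x y e : 0 < x <= y -> e <= 0 -> Rpower y e <= Rpower x e.
Proof.
  intros Hxy He. destruct (Req_dec e 0) as [->|Hne].
  - rewrite !Rpower_O by lra. lra.
  - assert (E : forall z, Rpower z e = / Rpower z (- e)).
    { intros z. rewrite <- Rpower_Ropp. rewrite Ropp_involutive. reflexivity. }
    rewrite !E. apply Rinv_le_contravar. apply Rpower_pos. apply Rle_Rpower_l; lra.
Qed.

Fixpoint rsum (f : nat -> R) (N : nat) : R :=
  match N with O => 0 | S k => rsum f k + f (S k) end.

Lemma csum_bound (f : nat -> C) (g : nat -> R) N : (forall n, (1 <= n <= N)%nat -> Cmod (f n) <= g n) ->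
  Cmod (csum f N) <= rsum g N.
Proof.
  induction N as [|N IH]; intros H; simpl.
  - rewrite Cmod_0. lra.
  - eapply Rle_trans. apply Cmod_triangle. apply Rplus_le_compat. apply IH. intros; apply H; lia. apply H; lia.
Qed.

Lemma rsum_le (f g : nat -> R) N : (forall n, (1 <= n <= N)%nat -> f n <= g n) -> rsum f N <= rsum g N.
Proof.
  induction N as [|N IH]; intros H; simpl. lra. apply Rplus_le_compat. apply IH; intros; apply H; lia. apply H; lia.
Qed.

Lemma sum_small b N : 0 < b < 1 -> (1 <= N)%nat ->
  rsum (fun n => Rpower (INR n) (- b)) N <= Rpower (INR N) (1 - b) / (1 - b).
Proof.
  intros Hb HN. induction N as [|N IH]; [lia|].
  destruct (Nat.eq_dec N 0) as [->|HN0].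
  - simpl. unfold Rpower. rewrite ln_1, !Rmult_0_r, exp_0.
    rewrite Rplus_0_l; unfold Rdiv; rewrite Rmult_1_l. rewrite <- Rinv_1 at 1. apply Rinv_le_contravar; lra.
  - cbn [rsum]. specialize (IH ltac:(lia)).
    assert (HN1 : 1 <= INR N) by (apply (le_INR 1); lia).
    destruct (mvt_pow (INR N) b ltac:(lra)) as [c [Hc E]].
    cbv beta. rewrite S_INR.
    assert (Rpower (INR N + 1) (- b) <= Rpower c (- b)) by (apply Rpower_anti; lra).
    apply Rle_trans with (Rpower (INR N) (1 - b) / (1 - b) + Rpower c (- b)). lra.
    apply Rmult_le_reg_r with (1 - b). lra.
    replace ((Rpower (INR N) (1 - b) / (1 - b) + Rpower c (- b)) * (1 - b)) with
      (Rpower (INR N) (1 - b) + (1 - b) * Rpower c (- b)) by (field; lra).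
    rewrite <- E. right. field. lra.
Qed.

Lemma sum_tail b N M : 1 < b -> (1 <= N)%nat -> (N <= M)%nat ->
  rsum (fun n => Rpower (INR n) (- b)) M - rsum (fun n => Rpower (INR n) (- b)) N
   <= (Rpower (INR N) (1 - b) - Rpower (INR M) (1 - b)) / (b - 1).
Proof.
  intros Hb HN HM. induction M as [|M IH].
  - lia.
  - destruct (Nat.eq_dec N (S M)) as [<-|HNM].
    + rewrite !Rminus_eq_0. unfold Rdiv. lra.
    + specialize (IH ltac:(lia)). cbn [rsum].
      assert (HM1 : 1 <= INR M) by (apply (le_INR 1); lia).
      destruct (mvt_pow (INR M) b ltac:(lra)) as [c [Hc E]].
      cbv beta. rewrite S_INR.
      assert (Rpower (INR M + 1) (- b) <= Rpower c (- b)) by (apply Rpower_anti; lra).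
      apply Rle_trans with ((Rpower (INR N) (1 - b) - Rpower (INR M) (1 - b)) / (b - 1) + Rpower c (- b)). lra.
      apply Rmult_le_reg_r with (b - 1). lra.
      replace (((Rpower (INR N) (1 - b) - Rpower (INR M) (1 - b)) / (b - 1) + Rpower c (- b)) * (b - 1)) with
        (Rpower (INR N) (1 - b) - (Rpower (INR M) (1 - b) + (1 - b) * Rpower c (- b))) by (field; lra).
      rewrite <- E. right. field. lra.
Qed.

Lemma Cmod_le_sum (z : C) : Cmod z <= Rabs (Re z) + Rabs (Im z).
Proof.
  destruct z as [a b]. unfold Cmod, Re, Im; simpl.
  apply Rsqr_incr_0_var. rewrite Rsqr_sqrt. unfold Rsqr.
  pose proof (Rabs_pos a). pose proof (Rabs_pos b).
  replace (a * (a * 1) + b * (b * 1)) with (Rabs a * Rabs a + Rabs b * Rabs b).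
  nra. rewrite <- !Rabs_mult. rewrite !Rabs_pos_eq by nra. ring.
  nra. pose proof (Rabs_pos a). pose proof (Rabs_pos b). lra.
Qed.

Lemma Rpower_1base e : Rpower 1 e = 1.
Proof. unfold Rpower. rewrite ln_1, Rmult_0_r. apply exp_0. Qed.

Lemma Rpower_mono_exp x e1 e2 : 1 <= x -> e1 <= e2 -> Rpower x e1 <= Rpower x e2.
Proof. intros. apply Rle_Rpower; auto. Qed.

Lemma zeta_upper u1 u2 : 1/2 < u1 -> u1 < u2 ->
  exists C1, 0 <= C1 /\ forall s, u1 <= Re s <= u2 -> 1 <= Rabs (Im s) ->
    Cmod (zeta s) <= C1 * Rpower (Rabs (Im s)) (1 - Rmin u1 (3/4)).
Proof.
  intros Hu1 Hu12. set (b := Rmin u1 (3/4)).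
  assert (Hb1 : b <= u1) by apply Rmin_l. assert (Hb2 : b <= 3/4) by apply Rmin_r.
  assert (Hb0 : 1/2 < b) by (unfold b; apply Rmin_glb_lt; lra).
  exists (1 / (1 - b) + 1 + 2 * (u2 + 1) / u1). split.
  { assert (0 <= 1 / (1 - b)) by (apply Rlt_le, Rdiv_lt_0_compat; lra).
    assert (0 <= 2 * (u2 + 1) / u1) by (apply Rlt_le, Rdiv_lt_0_compat; lra). lra. }
  intros s Hs Ht. set (t := Rabs (Im s)) in *.
  assert (Hs1 : s <> 1%C).
  { intros E. unfold t in Ht. rewrite E in Ht. simpl in Ht. rewrite Rabs_R0 in Ht. lra. }
  destruct (nat_floor t ltac:(lra)) as [N [HN1 HN2]].
  assert (HN : (1 <= N)%nat).
  { destruct N. simpl in HN2. lra. lia. }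
  assert (HNr : 1 <= INR N) by (apply (le_INR 1); auto).
  destruct (zf_tail s (INR N) HNr ltac:(lra)) as [l [Hl Bl]].
  rewrite (zeta_id s N l ltac:(lra) Hs1 HN Hl).
  set (T := Rpower t (1 - b)).
  assert (HT1 : Rpower (INR N) (1 - b) <= T) by (apply Rle_Rpower_l; lra).
  assert (BA : Cmod (csum (term s) N) <= T / (1 - b)).
  { eapply Rle_trans. apply (csum_bound _ (fun n => Rpower (INR n) (- b))).
    - intros n Hn. unfold term. rewrite cpow_mod. 2:{ apply (lt_INR 0); lia. }
      apply Rle_Rpower. apply (le_INR 1); lia. change (Re (- s)%C) with (- Re s). lra.
    - eapply Rle_trans. apply sum_small; auto; lra.
      unfold Rdiv. apply Rmult_le_compat_r; auto. apply Rlt_le, Rinv_0_lt_compat; lra. }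
  assert (HIm : t <= Cmod (s - 1)%C).
  { unfold t. replace (Im s) with (Im (s - 1)%C) by (destruct s; unfold Im, Cminus, Copp, Cplus, RtoC; simpl; ring).
    apply Im_le_Cmod. }
  assert (BB : Cmod (cpow (INR N) (1 - s) / (s - 1))%C <= T).
  { rewrite Cmod_div. 2:{ intros E. apply Hs1. replace s with ((s - 1) + 1)%C by ring. rewrite E. ring. }
    rewrite cpow_mod by lra.
    replace (Re (1 - s)%C) with (1 - Re s) by (destruct s; unfold Re, Cminus, Copp, Cplus, RtoC; simpl; ring).
    apply Rle_trans with (Rpower (INR N) (1 - b) * 1).
    - unfold Rdiv. apply Rmult_le_compat. apply Rlt_le, Rpower_pos. apply Rlt_le, Rinv_0_lt_compat; lra.
      apply Rle_Rpower; lra.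
      apply Rmult_le_reg_l with (Cmod (s - 1)%C). lra. rewrite Rinv_r by lra. lra.
    - rewrite Rmult_1_r. auto. }
  assert (BC : Cmod (s * l)%C <= 2 * (u2 + 1) / u1 * T).
  { rewrite Cmod_mult.
    assert (Hsm : Cmod s <= (u2 + 1) * t).
    { eapply Rle_trans. apply Cmod_le_sum. fold t. rewrite Rabs_pos_eq by lra. nra. }
    assert (Hl2 : Cmod l <= Rpower (INR N) (- b) / u1).
    { eapply Rle_trans. exact Bl. unfold Rdiv. apply Rmult_le_compat. apply Rlt_le, Rpower_pos.
      apply Rlt_le, Rinv_0_lt_compat; lra. apply Rle_Rpower; lra. apply Rinv_le_contravar; lra. }
    assert (HNb : Rpower (INR N) (- b) <= 2 * Rpower t (- b)).
    { rewrite !Rpower_Ropp.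
      assert (Rpower t b <= Rpower (2 * INR N) b) by (apply Rle_Rpower_l; lra).
      rewrite <- Rpower_mult_distr in H by lra.
      assert (Rpower 2 b <= 2).
      { rewrite <- (Rpower_1 2) at 2 by lra. apply Rle_Rpower; lra. }
      pose proof (Rpower_pos t b). pose proof (Rpower_pos (INR N) b).
      apply Rmult_le_reg_r with (Rpower (INR N) b * Rpower t b). nra.
      field_simplify; try lra. nra. }
    assert (Htb : t * Rpower t (- b) = T).
    { unfold T. rewrite <- (Rpower_1 t) at 1 by lra. rewrite <- Rpower_plus. f_equal; ring. }
    pose proof (Cmod_ge_0 l). pose proof (Cmod_ge_0 s). pose proof (Rpower_pos t (- b)).
    apply Rle_trans with ((u2 + 1) * t * (2 * Rpower t (- b) / u1)).
    - apply Rmult_le_compat; auto. eapply Rle_trans. exact Hl2. unfold Rdiv.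
      apply Rmult_le_compat_r. apply Rlt_le, Rinv_0_lt_compat; lra. auto.
    - rewrite <- Htb. right. field. lra. }
  eapply Rle_trans. apply Cmod_triangle. rewrite Cmod_opp.
  eapply Rle_trans. apply Rplus_le_compat_r. apply Cmod_triangle.
  assert (0 <= T) by (apply Rlt_le, Rpower_pos).
  replace ((1 / (1 - b) + 1 + 2 * (u2 + 1) / u1) * T) with (T / (1 - b) + T + 2 * (u2 + 1) / u1 * T) by (field; lra).
  lra.
Qed.

Section NatPart.
Local Open Scope nat_scope.

Fixpoint roughb (d n : nat) : bool :=
  match d with
  | O => true
  | S d' => (roughb d' n && ((d' <? 2) || negb (n mod d' =? 0)))%bool
  end.

Lemma rough_spec d n : roughb d n = true <-> (forall e, 2 <= e < d -> n mod e <> 0).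
Proof.
  induction d as [|d IH]; simpl.
  - split; auto. intros _ e He. lia.
  - rewrite Bool.andb_true_iff, IH, Bool.orb_true_iff, Nat.ltb_lt, Bool.negb_true_iff, Nat.eqb_neq.
    split.
    + intros [H1 H2] e He. destruct (Nat.eq_dec e d) as [->|Hne].
      * destruct H2; [lia|auto].
      * apply H1. lia.
    + intros H. split.
      * intros e He. apply H. lia.
      * destruct (Nat.lt_ge_cases d 2); [left; auto|right; apply H; lia].
Qed.

Lemma mod0_div e n : e <> 0 -> (n mod e = 0 <-> Nat.divide e n).
Proof. intros He. apply Nat.mod_divide. auto. Qed.

Lemma rough_1 d : roughb d 1 = true.
Proof. apply rough_spec. intros e He. rewrite Nat.mod_small by lia. lia. Qed.

Lemma rough_big d n : roughb d n = true -> 2 <= n -> d <= n.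
Proof.
  intros H Hn. rewrite rough_spec in H. destruct (Nat.lt_ge_cases n d) as [Hl|Hl]; auto.
  exfalso. apply (H n). lia. apply Nat.mod_same. lia.
Qed.

Lemma rough_prime_mul d m : 2 <= d -> roughb d d = true -> roughb d (d * m) = roughb d m.
Proof.
  intros Hd Hp. rewrite rough_spec in Hp.
  apply Bool.eq_true_iff_eq. rewrite !rough_spec. split.
  - intros H e He Hm. apply (H e He). apply mod0_div; [lia|]. apply mod0_div in Hm; [|lia].
    apply Nat.divide_mul_r. auto.
  - intros H e He Hm. apply mod0_div in Hm; [|lia].
    assert (Hg : Nat.gcd e d = 1).
    { set (g := Nat.gcd e d).
      assert (g <> 0) by (intros Hg; apply Nat.gcd_eq_0_l in Hg; lia).
      assert (g <= e) by (apply Nat.divide_pos_le; [lia|apply Nat.gcd_divide_l]).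
      destruct (Nat.eq_dec g 1) as [E|E]; auto. exfalso.
      apply (Hp g). lia. apply mod0_div. auto. apply Nat.gcd_divide_r. }
    apply (H e He). apply mod0_div. lia. eapply Nat.gauss; eauto.
Qed.

Lemma rough_comp d n : 2 <= d -> roughb d d = false -> roughb d n = true -> n mod d <> 0.
Proof.
  intros Hd Hc Hn Hm. rewrite rough_spec in Hn.
  assert (~ roughb d d = true) by (rewrite Hc; discriminate). rewrite rough_spec in H.
  apply not_all_ex_not in H. destruct H as [e He].
  apply imply_to_and in He. destruct He as [He1 He2]. apply NNPP in He2.
  apply (Hn e He1). apply mod0_div. lia. apply mod0_div in He2; [|lia]. apply mod0_div in Hm; [|lia].
  eapply Nat.divide_trans; eauto.
Qed.

Lemma mod_off d N k : 0 < k < d -> (d * N + k) mod d <> 0.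
Proof.
  intros Hk. replace (d * N + k) with (k + N * d) by ring. rewrite Nat.mod_add by lia.
  rewrite Nat.mod_small by lia. lia.
Qed.

Lemma mod_mul_d d m : 0 < d -> (d * m) mod d = 0.
Proof. intros. rewrite Nat.mul_comm. apply Nat.mod_mul. lia. Qed.

End NatPart.

Lemma csum_ext (f g : nat -> C) N : (forall n, (1 <= n <= N)%nat -> f n = g n) -> csum f N = csum g N.
Proof.
  induction N as [|N IH]; intros H; simpl; auto. rewrite IH by (intros; apply H; lia). rewrite H by lia. auto.
Qed.

Lemma csum_scal c (f : nat -> C) N : csum (fun n => c * f n)%C N = (c * csum f N)%C.
Proof. induction N as [|N IH]; simpl. ring. rewrite IH. ring. Qed.

Lemma csum_minus (f g : nat -> C) N : csum (fun n => f n - g n)%C N = (csum f N - csum g N)%C.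
Proof. induction N as [|N IH]; simpl. ring. rewrite IH. ring. Qed.

Lemma csum_diff_bound (f : nat -> C) (g : nat -> R) N M : (N <= M)%nat ->
  (forall n, (N < n <= M)%nat -> Cmod (f n) <= g n) ->
  Cmod (csum f M - csum f N)%C <= rsum g M - rsum g N.
Proof.
  intros HNM. induction M as [|M IH]; intros H.
  - assert (N = 0%nat) by lia. subst. simpl. replace (0 - 0)%C with (RtoC 0) by ring. rewrite Cmod_0. lra.
  - destruct (Nat.eq_dec N (S M)) as [<-|Hne].
    + match goal with |- context [Cmod (?a - ?a)%C] => replace (a - a)%C with (RtoC 0) by ring end.
      rewrite Cmod_0. lra.
    + cbn [csum rsum]. replace (csum f M + f (S M) - csum f N)%C with ((csum f M - csum f N) + f (S M))%C by ring.
      eapply Rle_trans. apply Cmod_triangle.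
      assert (Cmod (csum f M - csum f N)%C <= rsum g M - rsum g N) by (apply IH; [lia|intros; apply H; lia]).
      assert (Cmod (f (S M)) <= g (S M)) by (apply H; lia). lra.
Qed.


Definition rterm (w : C) (d n : nat) : C := if roughb d n then term w n else 0%C.
Definition RS (w : C) (d N : nat) : C := csum (rterm w d) N.
Definition Dterm (w : C) (d n : nat) : C := if (roughb d n && (n mod d =? 0))%bool then term w n else 0%C.

Lemma term_mod (w : C) n : (1 <= n)%nat -> Cmod (term w n) = Rpower (INR n) (- Re w).
Proof.
  intros Hn. unfold term. rewrite cpow_mod. reflexivity. apply (lt_INR 0); lia.
Qed.

Lemma RS2 (w : C) N : RS w 2 N = csum (term w) N.
Proof. unfold RS. apply csum_ext. intros n _. unfold rterm. reflexivity. Qed.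

Lemma RS_comp (w : C) d N : (2 <= d)%nat -> roughb d d = false -> RS w (S d) N = RS w d N.
Proof.
  intros Hd Hc. unfold RS. apply csum_ext. intros n _. unfold rterm. simpl.
  destruct (roughb d n) eqn:E; simpl; auto.
  assert (d <? 2 = false)%nat by (apply Nat.ltb_ge; lia). rewrite H. simpl.
  pose proof (rough_comp d n Hd Hc E). apply Nat.eqb_neq in H0. rewrite H0. reflexivity.
Qed.

Lemma RS_Ddiff (w : C) d N : (2 <= d)%nat -> (RS w d N - RS w (S d) N)%C = csum (Dterm w d) N.
Proof.
  intros Hd. unfold RS. rewrite <- csum_minus. apply csum_ext. intros n _. unfold rterm, Dterm. simpl.
  assert (d <? 2 = false)%nat by (apply Nat.ltb_ge; lia). rewrite H. simpl.
  destruct (roughb d n); destruct (n mod d =? 0); simpl; ring.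
Qed.

Lemma Dsum_skip (w : C) d N k : (2 <= d)%nat -> (k < d)%nat -> csum (Dterm w d) (d * N + k) = csum (Dterm w d) (d * N).
Proof.
  intros Hd. induction k as [|k IH]; intros Hk.
  - rewrite Nat.add_0_r. auto.
  - rewrite Nat.add_succ_r. cbn [csum]. rewrite IH by lia. unfold Dterm.
    assert (S (d * N + k) mod d =? 0 = false)%nat by (apply Nat.eqb_neq; rewrite <- Nat.add_succ_r; apply mod_off; lia).
    rewrite H. rewrite Bool.andb_false_r. ring.
Qed.

Lemma Dsum_reindex (w : C) d N : (2 <= d)%nat -> roughb d d = true ->
  csum (fun m => if roughb d m then term w (d * m) else 0%C) N = csum (Dterm w d) (d * N).
Proof.
  intros Hd Hp. induction N as [|N IH].
  - rewrite Nat.mul_0_r. reflexivity.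
  - replace (d * S N)%nat with (S (d * N + (d - 1))) by lia.
    simpl csum at 2. rewrite Dsum_skip by lia. simpl csum. rewrite IH. f_equal.
    replace (S (d * N + (d - 1))) with (d * S N)%nat by lia.
    unfold Dterm. rewrite rough_prime_mul by auto.
    rewrite (proj2 (Nat.eqb_eq _ _) (mod_mul_d d (S N) ltac:(lia))). rewrite Bool.andb_true_r. reflexivity.
Qed.

Lemma term_mul (w : C) d m : (1 <= d)%nat -> (1 <= m)%nat -> term w (d * m) = (term w d * term w m)%C.
Proof.
  intros Hd Hm. unfold term. rewrite mult_INR. apply cpow_mulb; apply (lt_INR 0); lia.
Qed.

Lemma RS_prime_err (w : C) d N : (2 <= d)%nat -> roughb d d = true -> 1 < Re w -> (1 <= N)%nat ->
  Cmod (RS w (S d) N - RS w d N * (1 - term w d))%C <= Rpower (INR N) (1 - Re w) / (Re w - 1).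
Proof.
  intros Hd Hp Hw HN.
  assert (E1 : (term w d * RS w d N)%C = csum (Dterm w d) (d * N)).
  { rewrite <- Dsum_reindex by auto. unfold RS. rewrite <- csum_scal. apply csum_ext.
    intros n Hn. unfold rterm. destruct (roughb d n). rewrite term_mul by lia. ring. ring. }
  replace (RS w (S d) N - RS w d N * (1 - term w d))%C with
     (term w d * RS w d N - (RS w d N - RS w (S d) N))%C by ring.
  rewrite E1, RS_Ddiff by auto.
  eapply Rle_trans. apply (csum_diff_bound _ (fun n => Rpower (INR n) (- Re w))). nia.
  - intros n Hn. unfold Dterm. destruct (_ && _)%bool.
    + rewrite term_mod by lia. lra.
    + rewrite Cmod_0. apply Rlt_le, Rpower_pos.
  - eapply Rle_trans. apply sum_tail; auto. nia.
    unfold Rdiv. apply Rmult_le_compat_r. apply Rlt_le, Rinv_0_lt_compat; lra.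
    pose proof (Rpower_pos (INR (d * N)) (1 - Re w)). lra.
Qed.

Lemma RS_one (w : C) d n : (2 <= d)%nat -> (1 <= n <= d - 1)%nat -> RS w d n = 1%C.
Proof.
  intros Hd. induction n as [|n IH]; intros Hn. lia.
  destruct (Nat.eq_dec n 0) as [->|Hn0].
  - unfold RS. simpl. unfold rterm. rewrite rough_1. unfold term. simpl INR. rewrite cpow_at1. ring.
  - unfold RS in *. simpl. rewrite IH by lia. unfold rterm.
    assert (roughb d (S n) = false).
    { destruct (roughb d (S n)) eqn:E; auto. apply rough_big in E; lia. }
    rewrite H. ring.
Qed.

Lemma RS_near1 (w : C) d N : (2 <= d)%nat -> (d - 1 <= N)%nat -> 1 < Re w ->
  Cmod (RS w d N - 1)%C <= Rpower (INR (d - 1)) (1 - Re w) / (Re w - 1).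
Proof.
  intros Hd HN Hw. rewrite <- (RS_one w d (d - 1)) by lia. unfold RS.
  eapply Rle_trans. apply (csum_diff_bound _ (fun n => Rpower (INR n) (- Re w))). auto.
  - intros n Hn. unfold rterm. destruct (roughb d n).
    + rewrite term_mod by lia. lra.
    + rewrite Cmod_0. apply Rlt_le, Rpower_pos.
  - eapply Rle_trans. apply sum_tail; auto. lia.
    unfold Rdiv. apply Rmult_le_compat_r. apply Rlt_le, Rinv_0_lt_compat; lra.
    pose proof (Rpower_pos (INR N) (1 - Re w)). lra.
Qed.



Definition climseq (u : nat -> C) (L : C) :=
  forall eps, 0 < eps -> exists N0, forall N, (N0 <= N)%nat -> Cmod (u N - L)%C < eps.

Lemma nat_small e : e < 0 -> forall eps, 0 < eps ->
  exists N0 : nat, forall N, (N0 <= N)%nat -> (1 <= N)%nat /\ Rpower (INR N) e < eps.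
Proof.
  intros He eps Heps. destruct (Rpower_liminf e He eps Heps) as [M HM].
  destruct (nat_above M) as [n Hn]. exists (S n). intros N HN. split. lia.
  apply HM. apply Rlt_le_trans with (INR n); auto. apply le_INR. lia.
Qed.

Lemma psums_zeta w : 1 < Re w -> w <> 1%C -> climseq (csum (term w)) (zeta w).
Proof.
  intros Hw Hw1 eps Heps.
  assert (Hm1 : 0 < Cmod (w - 1)%C).
  { apply Cmod_gt_0. intros E. apply Hw1. replace w with ((w - 1) + 1)%C by ring. rewrite E. ring. }
  pose proof (Cmod_ge_0 w).
  assert (E1 : 0 < eps * Cmod (w - 1)%C / 2) by (apply Rdiv_lt_0_compat; [apply Rmult_lt_0_compat|]; lra).
  assert (E2 : 0 < eps * Re w / (2 * (Cmod w + 1))) by (apply Rdiv_lt_0_compat; [apply Rmult_lt_0_compat|]; lra).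
  destruct (nat_small (1 - Re w) ltac:(lra) _ E1) as [N1 H1].
  destruct (nat_small (- Re w) ltac:(lra) _ E2) as [N2 H2].
  exists (Nat.max N1 N2). intros N HN.
  destruct (H1 N ltac:(lia)) as [HN1 B1]. destruct (H2 N ltac:(lia)) as [_ B2].
  assert (HNr : 1 <= INR N) by (apply (le_INR 1); auto).
  destruct (zf_tail w (INR N) HNr ltac:(lra)) as [l [Hl Bl]].
  rewrite (zeta_id w N l ltac:(lra) Hw1 HN1 Hl).
  replace (csum (term w) N - (csum (term w) N + cpow (INR N) (1 - w) / (w - 1) - w * l))%C
    with (w * l - cpow (INR N) (1 - w) / (w - 1))%C by ring.
  eapply Rle_lt_trans. apply Cmod_triangle. rewrite Cmod_opp, Cmod_mult, Cmod_div, cpow_mod.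
  2: lra. 2:{ apply Cmod_gt_0 in Hm1. auto. }
  replace (Re (1 - w)%C) with (1 - Re w) by (destruct w; unfold Re, Cminus, Copp, Cplus, RtoC; simpl; ring).
  assert (A1 : Rpower (INR N) (1 - Re w) / Cmod (w - 1)%C < eps / 2).
  { apply Rmult_lt_reg_r with (Cmod (w - 1)%C); auto. unfold Rdiv at 1. rewrite Rmult_assoc, Rinv_l by lra.
    rewrite Rmult_1_r. replace (eps / 2 * Cmod (w - 1)%C) with (eps * Cmod (w - 1)%C / 2) by field. auto. }
  assert (A2 : Cmod w * Cmod l < eps / 2).
  { apply Rle_lt_trans with ((Cmod w + 1) * (Rpower (INR N) (- Re w) / Re w)).
    - apply Rmult_le_compat. auto. apply Cmod_ge_0. lra. auto.
    - apply Rmult_lt_reg_r with (Re w / (Cmod w + 1)). apply Rdiv_lt_0_compat; lra.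
      replace ((Cmod w + 1) * (Rpower (INR N) (- Re w) / Re w) * (Re w / (Cmod w + 1))) with (Rpower (INR N) (- Re w)) by (field; lra).
      replace (eps / 2 * (Re w / (Cmod w + 1))) with (eps * Re w / (2 * (Cmod w + 1))) by (field; lra). auto. }
  lra.
Qed.

Definition fac (w : C) (d : nat) : C := if roughb d d then (1 - term w d)%C else 1%C.
Fixpoint Pw (w : C) (k : nat) : C := match k with O => 1%C | S k' => (Pw w k' * fac w (k' + 2))%C end.

Lemma Pw_bound w k : 0 < Re w -> Cmod (Pw w k) <= 2 ^ k.
Proof.
  intros Hw. induction k as [|k IH]; simpl.
  - rewrite Cmod_1. lra.
  - rewrite Cmod_mult. pose proof (Cmod_ge_0 (Pw w k)).
    assert (Cmod (fac w (k + 2)) <= 2).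
    { unfold fac. destruct (roughb _ _).
      - eapply Rle_trans. unfold Cminus. apply Cmod_triangle. rewrite Cmod_1, Cmod_opp, term_mod by lia.
        assert (Rpower (INR (k + 2)) (- Re w) <= 1).
        { rewrite <- (Rpower_O (INR (k+2))) by (apply (lt_INR 0); lia). apply Rle_Rpower. apply (le_INR 1); lia. lra. }
        lra.
      - rewrite Cmod_1. lra. }
    rewrite Rmult_comm. apply Rmult_le_compat; auto. apply Cmod_ge_0.
Qed.

Lemma level_lim w k : 1 < Re w -> w <> 1%C -> climseq (RS w (k + 2)) (zeta w * Pw w k)%C.
Proof.
  intros Hw Hw1. induction k as [|k IH].
  - simpl. intros eps Heps. destruct (psums_zeta w Hw Hw1 eps Heps) as [N0 H0]. exists N0. intros N HN.
    rewrite RS2. replace (zeta w * 1)%C with (zeta w) by ring. auto.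
  - set (d := (k + 2)%nat) in *. replace (S k + 2)%nat with (S d) by (unfold d; lia).
    simpl Pw. fold d. unfold fac.
    destruct (roughb d d) eqn:Hp.
    + intros eps Heps.
      assert (E4 : 0 < eps / 4) by lra.
      destruct (IH _ E4) as [N1 H1].
      destruct (nat_small (1 - Re w) ltac:(lra) (eps / 4 * (Re w - 1))) as [N2 H2]. apply Rmult_lt_0_compat; lra.
      exists (Nat.max N1 N2). intros N HN.
      destruct (H2 N ltac:(lia)) as [HN1 B2].
      assert (Err := RS_prime_err w d N ltac:(unfold d; lia) Hp Hw HN1).
      assert (Hf : Cmod (1 - term w d)%C <= 2).
      { eapply Rle_trans. unfold Cminus. apply Cmod_triangle. rewrite Cmod_1, Cmod_opp, term_mod by (unfold d; lia).
        assert (Rpower (INR d) (- Re w) <= 1).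
        { rewrite <- (Rpower_O (INR d)) by (apply (lt_INR 0); unfold d; lia). apply Rle_Rpower. apply (le_INR 1); unfold d; lia. lra. }
        lra. }
      replace (RS w (S d) N - zeta w * (Pw w k * (1 - term w d)))%C with
        ((RS w (S d) N - RS w d N * (1 - term w d)) + (RS w d N - zeta w * Pw w k) * (1 - term w d))%C by ring.
      eapply Rle_lt_trans. apply Cmod_triangle. rewrite Cmod_mult.
      assert (Cmod (RS w d N - zeta w * Pw w k)%C < eps / 4) by (apply H1; lia).
      assert (Rpower (INR N) (1 - Re w) / (Re w - 1) < eps / 4).
      { apply Rmult_lt_reg_r with (Re w - 1). lra. unfold Rdiv. rewrite Rmult_assoc, Rinv_l by lra. lra. }
      pose proof (Cmod_ge_0 (RS w d N - zeta w * Pw w k)%C). pose proof (Cmod_ge_0 (1 - term w d)%C).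
      nra.
    + intros eps Heps. destruct (IH eps Heps) as [N0 H0]. exists N0. intros N HN.
      rewrite RS_comp by (auto; unfold d; lia). replace (zeta w * (Pw w k * 1))%C with (zeta w * Pw w k)%C by ring. auto.
Qed.

Lemma zeta_lower nu0 : 1 < nu0 -> exists c, 0 < c /\ forall w, nu0 <= Re w -> w <> 1%C -> c <= Cmod (zeta w).
Proof.
  intros Hnu.
  destruct (nat_small (1 - nu0) ltac:(lra) ((nu0 - 1) / 4)) as [N0 H0]. apply Rdiv_lt_0_compat; lra.
  destruct (H0 (S N0) ltac:(lia)) as [_ B0].
  set (k := N0). set (D := (k + 2)%nat).
  exists (/ 2 / 2 ^ k). split. apply Rdiv_lt_0_compat. lra. apply pow_lt; lra.
  intros w Hw Hw1.
  assert (Hq : Rpower (INR (D - 1)) (1 - Re w) / (Re w - 1) <= / 4).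
  { replace (D - 1)%nat with (S N0) by (unfold D, k; lia).
    apply Rle_trans with (Rpower (INR (S N0)) (1 - nu0) / (nu0 - 1)).
    - unfold Rdiv. apply Rmult_le_compat. apply Rlt_le, Rpower_pos. apply Rlt_le, Rinv_0_lt_compat; lra.
      apply Rle_Rpower. apply (le_INR 1); lia. lra. apply Rinv_le_contravar; lra.
    - apply Rmult_le_reg_r with (nu0 - 1). lra. unfold Rdiv. rewrite Rmult_assoc, Rinv_l by lra. lra. }
  destruct (level_lim w k ltac:(lra) Hw1 (/ 4) ltac:(lra)) as [N1 H1].
  set (N := Nat.max N1 D).
  assert (A := H1 N ltac:(unfold N; lia)).
  assert (B := RS_near1 w D N ltac:(unfold D; lia) ltac:(unfold N; lia) ltac:(lra)).
  fold D in A.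
  assert (Hz : / 2 <= Cmod (zeta w * Pw w k)%C).
  { assert (Cmod (1 : C) <= Cmod (zeta w * Pw w k)%C + Cmod (RS w D N - zeta w * Pw w k)%C + Cmod (RS w D N - 1)%C).
    { set (a := (zeta w * Pw w k)%C). set (x := (RS w D N - a)%C). set (y := (RS w D N - 1)%C).
      assert (E : (1 : C) = (a + x - y)%C) by (unfold x, y; ring).
      apply Rle_trans with (Cmod (a + x - y)%C). right. f_equal. exact E.
      eapply Rle_trans. unfold Cminus at 1. apply Cmod_triangle. rewrite Cmod_opp.
      apply Rplus_le_compat_r. apply Cmod_triangle. }
    rewrite Cmod_1 in H. lra. }
  rewrite Cmod_mult in Hz. pose proof (Pw_bound w k ltac:(lra)). pose proof (Cmod_ge_0 (zeta w)).
  pose proof (pow_lt 2 k ltac:(lra)).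
  apply Rmult_le_reg_r with (2 ^ k). auto. unfold Rdiv. rewrite Rmult_assoc, Rinv_l by lra. nra.
Qed.

Lemma exp_split p y : 0 < y -> exp ((1 - p) * ln y) = exp (- p * ln y) * y.
Proof.
  intros Hy. replace ((1 - p) * ln y) with (- p * ln y + ln y) by ring. rewrite exp_plus, exp_ln; auto.
Qed.

Lemma g_int_pos K p t0 : 1 < p -> 0 < t0 -> 0 <= K ->
  ex_RInt_gen (fun t => K * Rpower (1 + Rabs t) (- p)) (at_point t0) (Rbar_locally p_infty).
Proof.
  intros Hp Ht0 HK.
  set (Phi := fun y => - K / (p - 1) * Rpower (1 + y) (1 - p)).
  exists (0 - Phi t0). unfold is_RInt_gen.
  apply filterlimi_lim_ext_loc with (fun ab => Phi (snd ab) - Phi (fst ab)).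
  - apply Filter_prod with (fun x => x = t0) (fun y => 0 < y). reflexivity. exists 0. auto.
    intros x y -> Hy. simpl.
    assert (Hpos : forall t, Rmin t0 y <= t <= Rmax t0 y -> 0 < t).
    { intros t Ht. assert (0 < Rmin t0 y) by (apply Rmin_glb_lt; auto). lra. }
    eapply is_RInt_ext with (f := fun t => K * Rpower (1 + t) (- p)).
    { intros t Ht. rewrite (Rabs_pos_eq t). reflexivity.
      assert (0 < Rmin t0 y) by (apply Rmin_glb_lt; auto). lra. }
    apply (is_RInt_derive (V := R_CompleteNormedModule) Phi).
    + intros t Ht. specialize (Hpos t Ht). unfold Phi, Rpower.
      auto_derive. lra. rewrite exp_split by lra. field. lra.
    + intros t Ht. specialize (Hpos t Ht).
      apply (ex_derive_continuous (K := R_AbsRing) (V := R_NormedModule)).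
      unfold Rpower. auto_derive. lra.
  - apply filterlim_locally. intros eps.
    assert (He : 0 < eps * (p - 1) / (K + 1)) by (apply Rdiv_lt_0_compat; [apply Rmult_lt_0_compat; [apply cond_pos|]|]; lra).
    destruct (Rpower_liminf (1 - p) ltac:(lra) _ He) as [M HM].
    apply Filter_prod with (fun x => x = t0) (fun y => M < 1 + y /\ 0 < 1 + y). reflexivity.
    exists (Rmax M 0). intros y Hy. split. pose proof (Rmax_l M 0). lra. pose proof (Rmax_r M 0). lra.
    intros x y -> [Hy1 Hy2]. simpl. unfold ball; simpl; unfold AbsRing_ball, abs, minus, plus, opp; simpl.
    replace (Phi y + - Phi t0 + - (0 + - Phi t0)) with (Phi y) by ring.
    unfold Phi. specialize (HM _ Hy1). pose proof (Rpower_pos (1 + y) (1 - p)).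
    rewrite Rabs_left1.
    2:{ pose proof (nonneg_div3 K (Rpower (1 + y) (1 - p)) (p - 1) HK H ltac:(lra)). unfold Rdiv in *. nra. }
    apply Rle_lt_trans with ((K + 1) / (p - 1) * Rpower (1 + y) (1 - p)).
    + unfold Rdiv. assert (0 < / (p - 1)) by (apply Rinv_0_lt_compat; lra). nra.
    + apply Rmult_lt_reg_r with ((p - 1) / (K + 1)). apply Rdiv_lt_0_compat; lra.
      replace ((K + 1) / (p - 1) * Rpower (1 + y) (1 - p) * ((p - 1) / (K + 1))) with (Rpower (1 + y) (1 - p)) by (field; lra).
      replace (eps * ((p - 1) / (K + 1))) with (eps * (p - 1) / (K + 1)) by (field; lra). auto.
Qed.

Lemma g_int_neg K p t0 : 1 < p -> 0 < t0 -> 0 <= K ->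
  ex_RInt_gen (fun t => K * Rpower (1 + Rabs t) (- p)) (Rbar_locally m_infty) (at_point (- t0)).
Proof.
  intros Hp Ht0 HK.
  set (Psi := fun y => K / (p - 1) * Rpower (1 - y) (1 - p)).
  exists (Psi (- t0) - 0). unfold is_RInt_gen.
  apply filterlimi_lim_ext_loc with (fun ab => Psi (snd ab) - Psi (fst ab)).
  - apply Filter_prod with (fun x => x < 0) (fun y => y = - t0). exists 0. auto. reflexivity.
    intros x y Hx ->. simpl.
    assert (Hneg : forall t, Rmin x (- t0) <= t <= Rmax x (- t0) -> t < 0).
    { intros t Ht. assert (Rmax x (- t0) < 0) by (apply Rmax_lub_lt; lra). lra. }
    eapply is_RInt_ext with (f := fun t => K * Rpower (1 - t) (- p)).
    { intros t Ht. rewrite (Rabs_left t). reflexivity.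
      assert (Rmax x (- t0) < 0) by (apply Rmax_lub_lt; lra). lra. }
    apply (is_RInt_derive (V := R_CompleteNormedModule) Psi).
    + intros t Ht. specialize (Hneg t Ht). unfold Psi, Rpower.
      auto_derive. lra. replace (1 + - t) with (1 - t) by ring. rewrite exp_split by lra. field. lra.
    + intros t Ht. specialize (Hneg t Ht).
      apply (ex_derive_continuous (K := R_AbsRing) (V := R_NormedModule)).
      unfold Rpower. auto_derive. lra.
  - apply filterlim_locally. intros eps.
    assert (He : 0 < eps * (p - 1) / (K + 1)) by (apply Rdiv_lt_0_compat; [apply Rmult_lt_0_compat; [apply cond_pos|]|]; lra).
    destruct (Rpower_liminf (1 - p) ltac:(lra) _ He) as [M HM].
    apply Filter_prod with (fun x => M < 1 - x /\ 0 < 1 - x) (fun y => y = - t0).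
    exists (Rmin (- M) 0). intros y Hy. split. pose proof (Rmin_l (- M) 0). lra. pose proof (Rmin_r (- M) 0). lra.
    reflexivity.
    intros x y [Hx1 Hx2] ->. simpl. unfold ball; simpl; unfold AbsRing_ball, abs, minus, plus, opp; simpl.
    unfold Psi. specialize (HM _ Hx1). pose proof (Rpower_pos (1 - x) (1 - p)).
    match goal with |- Rabs ?e < _ => replace e with (- (K / (p - 1) * Rpower (1 - x) (1 - p))) by ring end.
    rewrite Rabs_Ropp, Rabs_pos_eq.
    2:{ pose proof (nonneg_div3 K (Rpower (1 - x) (1 - p)) (p - 1) HK H ltac:(lra)). unfold Rdiv in *. nra. }
    apply Rle_lt_trans with ((K + 1) / (p - 1) * Rpower (1 - x) (1 - p)).
    + unfold Rdiv. assert (0 < / (p - 1)) by (apply Rinv_0_lt_compat; lra). nra.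
    + apply Rmult_lt_reg_r with ((p - 1) / (K + 1)). apply Rdiv_lt_0_compat; lra.
      replace ((K + 1) / (p - 1) * Rpower (1 - x) (1 - p) * ((p - 1) / (K + 1))) with (Rpower (1 - x) (1 - p)) by (field; lra).
      replace (eps * ((p - 1) / (K + 1))) with (eps * (p - 1) / (K + 1)) by (field; lra). auto.
Qed.

Lemma g_cont K p t : continuous (fun t => K * Rpower (1 + Rabs t) (- p)) t.
Proof.
  apply (continuous_comp (fun t => 1 + Rabs t) (fun y => K * Rpower y (- p))).
  - apply (continuous_plus (V := R_NormedModule) (fun _ => 1) Rabs). apply continuous_const. apply continuous_Rabs.
  - apply (ex_derive_continuous (K := R_AbsRing) (V := R_NormedModule)).
    unfold Rpower. auto_derive. pose proof (Rabs_pos t). lra.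
Qed.

Lemma nonneg_div' a d : 0 <= a -> 0 < d -> 0 <= a / d.
Proof. intros. unfold Rdiv. apply Rmult_le_pos; auto. apply Rlt_le, Rinv_0_lt_compat; auto. Qed.

Lemma Rpower_half p : Rpower (/ 2) (- p) = Rpower 2 p.
Proof. unfold Rpower. rewrite ln_Rinv by lra. f_equal. ring. Qed.

Theorem proposition4 (alpha : R) (k m : nat) (f : R -> R) (t0 u1 u2 : R) :
  1 < alpha ->
  (1 <= k)%nat ->
  1 + INR k / 2 <= INR m ->
  class_M alpha m f ->
  1 < t0 -> 1 / 2 < u1 -> u1 < u2 -> u2 < alpha ->
  exists g : R -> R,
    (forall t, continuous g t) /\
    ex_RInt_gen (fun t => Rabs (g t)) (at_point t0) (Rbar_locally p_infty) /\
    ex_RInt_gen (fun t => Rabs (g t)) (Rbar_locally m_infty) (at_point (- t0)) /\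
    (forall s : C, u1 <= Re s <= u2 -> t0 <= Rabs (Im s) ->
       Cmod (Cmult (Cdiv (Cpow (zeta s) k) (zeta (Cmult 2 s))) (mellin f s))
         <= g (Im s)).
Proof.
  intros Ha Hk Hm HM Ht0 Hu1 Hu12 Hu2.
  destruct (mellin_bound alpha m f u1 u2 HM ltac:(lra) Hu12 Hu2) as [C0 [HC0 BM]].
  destruct (zeta_upper u1 u2 Hu1 Hu12) as [C1 [HC1 BZ]].
  destruct (zeta_lower (2 * u1) ltac:(lra)) as [c [Hc BL]].
  set (b := Rmin u1 (3/4)) in *.
  assert (Hb0 : 1/2 < b) by (unfold b; apply Rmin_glb_lt; lra).
  set (p := INR m - INR k * (1 - b)).
  assert (Hk1 : 1 <= INR k) by (apply (le_INR 1); auto).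
  assert (Hp : 1 < p) by (unfold p; nra).
  set (K := C1 ^ k * C0 / c * Rpower 2 p).
  assert (HK : 0 <= K).
  { unfold K. apply Rmult_le_pos. apply nonneg_div'; auto. apply Rmult_le_pos; auto. apply pow_le; auto. apply Rlt_le, Rpower_pos. }
  exists (fun t => K * Rpower (1 + Rabs t) (- p)).
  assert (Eabs : forall t, K * Rpower (1 + Rabs t) (- p) = Rabs (K * Rpower (1 + Rabs t) (- p))).
  { intros t. symmetry. apply Rabs_pos_eq. apply Rmult_le_pos; auto. apply Rlt_le, Rpower_pos. }
  split; [|split; [|split]].
  - intros t. apply g_cont.
  - apply (ex_RInt_gen_ext_eq (fun t => K * Rpower (1 + Rabs t) (- p)) (fun t => Rabs (K * Rpower (1 + Rabs t) (- p)))).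
    exact Eabs. apply g_int_pos; lra.
  - apply (ex_RInt_gen_ext_eq (fun t => K * Rpower (1 + Rabs t) (- p)) (fun t => Rabs (K * Rpower (1 + Rabs t) (- p)))).
    exact Eabs. apply g_int_neg; lra.
  - intros s Hs Hts. set (t := Rabs (Im s)) in *.
    assert (Ht1 : 1 <= t) by lra.
    assert (Hre2 : Re (Cmult 2 s) = 2 * Re s) by (destruct s; unfold Re, Cmult; simpl; ring).
    assert (Him2 : Im (Cmult 2 s) = 2 * Im s) by (destruct s; unfold Im, Cmult; simpl; ring).
    assert (H2s : Cmult 2 s <> 1%C).
    { intros E. assert (Im (Cmult 2 s) = 0) by (rewrite E; reflexivity). rewrite Him2 in H.
      unfold t in Ht1. assert (Im s = 0) by lra. rewrite H0, Rabs_R0 in Ht1. lra. }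
    assert (BL2 := BL (Cmult 2 s) ltac:(rewrite Hre2; lra) H2s).
    assert (Hz2 : zeta (Cmult 2 s) <> 0%C) by (intros E; rewrite E, Cmod_0 in BL2; lra).
    rewrite Cmod_mult, Cmod_div, Cmod_pow by auto.
    specialize (BZ s Hs Ht1). specialize (BM s Hs Ht1). fold t b in BZ, BM.
    set (R := Rpower t (1 - b)) in *.
    assert (HR : 0 < R) by apply Rpower_pos.
    pose proof (Cmod_ge_0 (zeta s)). pose proof (Cmod_ge_0 (mellin f s)).
    assert (Htm : 0 < t ^ m) by (apply pow_lt; lra).
    apply Rle_trans with ((C1 * R) ^ k / c * (C0 / t ^ m)).
    { apply Rmult_le_compat.
      - apply nonneg_div'. apply pow_le; auto. lra.
      - auto.
      - unfold Rdiv. apply Rmult_le_compat. apply pow_le; auto. apply Rlt_le, Rinv_0_lt_compat; lra.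
        apply pow_incr; auto. apply Rinv_le_contravar; auto.
      - auto. }
    assert (ER : R ^ k / t ^ m = Rpower t (- p)).
    { unfold R. rewrite <- (Rpower_pow k (Rpower t (1 - b))) by apply Rpower_pos. rewrite Rpower_mult.
      rewrite <- Rpower_pow by lra. unfold Rdiv. rewrite <- Rpower_Ropp, <- Rpower_plus. f_equal. unfold p. ring. }
    assert (Eq : (C1 * R) ^ k / c * (C0 / t ^ m) = C1 ^ k * C0 / c * (R ^ k / t ^ m)).
    { rewrite Rpow_mult_distr. field. lra. }
    rewrite Eq, ER. unfold K. rewrite Rmult_assoc. apply Rmult_le_compat_l.
    { apply nonneg_div'; auto. apply Rmult_le_pos; auto. apply pow_le; auto. }
    fold t. eapply Rle_trans. apply (Rpower_anti ((1 + t) / 2) t (- p)). lra. lra.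
    replace ((1 + t) / 2) with (/ 2 * (1 + t)) by field.
    rewrite <- Rpower_mult_distr by lra. rewrite Rpower_half. lra.
Qed.
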